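(* There exist admissible sets of types $I(11,7)$, $I(11,6)$ and $I(10,6)$; that is, for each $(m,w)\in\{(11,7),(11,6),(10,6)\}$ there is an admissible set $S\subseteq\{0,1,2\}^m$ consisting of $\binom{m}{w}$ vectors, each of weight $w$.
   Context: A set $S\subseteq\{0,1,2\}^m$ is admissible if (1) for all distinct $s,s'\in S$ there are coordinates $i,j$ with $s_i=0\neq s'_i$ and $s_j\neq 0=s'_j$; and (2) for all distinct $s,s',s''\in S$ there is a coordinate $k$ such that the multiset $\{s_k,s'_k,s''_k\}$ equals $\{0,1,2\}$, $\{0,0,1\}$ or $\{0,0,2\}$. The weight of a vector is its number of nonzero coordinates. *)

(* Defs.v *)
From mathcomp Require Import all_boot.
Set Implicit Arguments. Unset Strict Implicit. Unset Printing Implicit Defensive.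

Definition vec (m : nat) := {ffun 'I_m -> 'I_3}.

Definition weight m (s : vec m) : nat := #|[set i | val (s i) != 0]|.

Definition cond1 m (s s' : vec m) : bool :=
  [exists i, (val (s i) == 0) && (val (s' i) != 0)] &&
  [exists j, (val (s j) != 0) && (val (s' j) == 0)].

Definition good_triple (a b c : nat) : bool :=
  [|| perm_eq [:: a; b; c] [:: 0; 1; 2],
      perm_eq [:: a; b; c] [:: 0; 0; 1] |
      perm_eq [:: a; b; c] [:: 0; 0; 2]].

Definition cond2 m (s s' s'' : vec m) : bool :=
  [exists k, good_triple (val (s k)) (val (s' k)) (val (s'' k))].

Definition admissible m (S : {set vec m}) : Prop :=
  (forall s s', s \in S -> s' \in S -> s != s' -> cond1 s s') /\
  (forall s s' s'', s \in S -> s' \in S -> s'' \in S ->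
      s != s' -> s != s'' -> s' != s'' -> cond2 s s' s'').

Definition admissible_of_type (m w : nat) : Prop :=
  exists S : {set vec m},
    [/\ admissible S, #|S| = 'C(m, w) & forall s, s \in S -> weight s = w].

(* Main.v *)
Require Import Defs.
From mathcomp Require Import all_boot.
Set Implicit Arguments. Unset Strict Implicit. Unset Printing Implicit Defensive.

Definition gt3 (a b c : nat) : bool :=
  match a, b, c with
  | 0,0,1 | 0,1,0 | 1,0,0 | 0,0,2 | 0,2,0 | 2,0,0
  | 0,1,2 | 0,2,1 | 1,0,2 | 1,2,0 | 2,0,1 | 2,1,0 => true
  | _,_,_ => false end.

Lemma gt3E a b c : a < 3 -> b < 3 -> c < 3 -> gt3 a b c = good_triple a b c.
Proof.
by case: a => [|[|[|a]]] //; case: b => [|[|[|b]]] //; case: c => [|[|[|c]]].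
Qed.

Lemma gt3C1 a b c : gt3 a b c = gt3 b a c.
Proof. by case: a => [|[|[|a]]]; case: b => [|[|[|b]]]; case: c => [|[|[|c]]]. Qed.
Lemma gt3C2 a b c : gt3 a b c = gt3 a c b.
Proof. by case: a => [|[|[|a]]]; case: b => [|[|[|b]]]; case: c => [|[|[|c]]]. Qed.

Fixpoint c2l (l1 l2 l3 : seq nat) : bool :=
  match l1, l2, l3 with
  | a :: r1, b :: r2, c :: r3 => gt3 a b c || c2l r1 r2 r3
  | _, _, _ => false end.

Fixpoint c1a (l1 l2 : seq nat) : bool :=
  match l1, l2 with
  | a :: r1, b :: r2 => ((a == 0) && (b != 0)) || c1a r1 r2
  | _, _ => false end.

Definition c1 l1 l2 := [&& c1a l1 l2 & c1a l2 l1].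

Lemma c2lC1 a b c : c2l a b c = c2l b a c.
Proof.
elim: a b c => [|x a IH] [|y b] [|z c] //=. by rewrite gt3C1 IH.
Qed.
Lemma c2lC2 a b c : c2l a b c = c2l a c b.
Proof.
elim: a b c => [|x a IH] [|y b] [|z c] //=. by rewrite gt3C2 IH.
Qed.

Lemma c2lP a b c : c2l a b c ->
  exists2 i, i < size a & gt3 (nth 0 a i) (nth 0 b i) (nth 0 c i).
Proof.
elim: a b c => [|x a IH] [|y b] [|z c] //= /orP [H|H].
  by exists 0.
by have [i Hi Hg] := IH _ _ H; exists i.+1.
Qed.

Lemma c1aP a b : c1a a b ->
  exists2 i, i < size a & (nth 0 a i == 0) && (nth 0 b i != 0).
Proof.
elim: a b => [|x a IH] [|y b] //= /orP [H|H].
  by exists 0.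
by have [i Hi Hg] := IH _ H; exists i.+1.
Qed.

Fixpoint pairw (T : Type) (Q : T -> T -> bool) (s : seq T) : bool :=
  if s is y :: s' then all (Q y) s' && pairw Q s' else true.

Fixpoint trip (T : Type) (R : T -> T -> T -> bool) (s : seq T) : bool :=
  if s is x :: s' then pairw (R x) s' && trip R s' else true.

Lemma pairwP (T : eqType) (Q : T -> T -> bool) s :
  (forall a b, Q a b = Q b a) -> pairw Q s ->
  forall a b, a \in s -> b \in s -> a != b -> Q a b.
Proof.
move=> QC; elim: s => [|y s IH] //= /andP [Hall Hp] a b.
rewrite !inE => Ha Hb nab.
have Hy : forall v, v \in s -> Q y v by move=> v Hv; apply: (allP Hall).
case: (eqVneq a y) Ha => [ea|nay] /= Ha.
  by move: Hb; rewrite -ea eq_sym (negbTE nab) /= ea; apply: Hy.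
case: (eqVneq b y) Hb => [eb|nby] /= Hb.
  by rewrite eb QC; apply: Hy.
by apply: IH.
Qed.

Lemma tripP (T : eqType) (R : T -> T -> T -> bool) s :
  (forall a b c, R a b c = R b a c) -> (forall a b c, R a b c = R a c b) ->
  trip R s ->
  forall a b c, a \in s -> b \in s -> c \in s -> a != b -> a != c -> b != c -> R a b c.
Proof.
move=> C1 C2; elim: s => [|x s IH] //= /andP [Hp Ht] a b c.
have Px : forall u v, u \in s -> v \in s -> u != v -> R x u v.
  by apply: pairwP => // u v; rewrite C2.
rewrite !inE => Ha Hb Hc nab nac nbc.
case: (eqVneq a x) Ha => [ea|nax] /= Ha.
  move: Hb Hc; rewrite -ea eq_sym (negbTE nab) eq_sym (negbTE nac) /= ea.
  by move=> Hb Hc; apply: Px.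
case: (eqVneq b x) Hb => [eb|nbx] /= Hb.
  move: Hc; rewrite -eb eq_sym (negbTE nbc) /= eb => Hc.
  by rewrite C1; apply: Px; rewrite // -eb.
case: (eqVneq c x) Hc => [ec|ncx] /= Hc.
  by rewrite ec C1 C2 C1; apply: Px; rewrite // eq_sym -?ec.
by apply: IH.
Qed.

Definition valid m (l : seq nat) := (size l == m) && all (fun x => x < 3) l.

Definition tovec m (l : seq nat) : vec m := [ffun i : 'I_m => inord (nth 0 l i)].

Lemma val_tovec m l (i : 'I_m) : valid m l -> val (tovec m l i) = nth 0 l i.
Proof.
case/andP => /eqP Hs Ha; rewrite ffunE /= inordK //.
by apply: (allP Ha); apply: mem_nth; rewrite Hs.
Qed.

Lemma tovec_inj m : {in valid m &, injective (@tovec m)}.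
Proof.
move=> l1 l2 H1 H2 E.
have S1 : size l1 = m by case/andP: H1 => /eqP.
have S2 : size l2 = m by case/andP: H2 => /eqP.
apply: (@eq_from_nth _ 0); first by rewrite S1 S2.
move=> i; rewrite S1 => Hi.
by rewrite -(val_tovec (Ordinal Hi) H1) -(val_tovec (Ordinal Hi) H2) E.
Qed.

Lemma valid_size m l : valid m l -> size l = m.
Proof. by case/andP => /eqP. Qed.

Lemma valid_nth m l i : valid m l -> nth 0 l i < 3.
Proof.
case/andP => _ Ha; case: (ltnP i (size l)) => Hi.
  by apply: (allP Ha); apply: mem_nth.
by rewrite nth_default.
Qed.

Lemma c1_cond1 m a b : valid m a -> valid m b -> c1 a b -> cond1 (tovec m a) (tovec m b).
Proof.
move=> Va Vb /andP [H1 H2]; apply/andP; split; apply/existsP.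
- have [i Hi Hg] := c1aP H1; rewrite (valid_size Va) in Hi.
  by exists (Ordinal Hi); rewrite !val_tovec.
- have [i Hi Hg] := c1aP H2; rewrite (valid_size Vb) in Hi.
  by exists (Ordinal Hi); rewrite !val_tovec // andbC.
Qed.

Lemma c2_cond2 m a b c : valid m a -> valid m b -> valid m c -> c2l a b c ->
  cond2 (tovec m a) (tovec m b) (tovec m c).
Proof.
move=> Va Vb Vc H; apply/existsP.
have [i Hi Hg] := c2lP H; rewrite (valid_size Va) in Hi.
exists (Ordinal Hi); rewrite !val_tovec //= -gt3E; [exact: Hg | exact: valid_nth Va | exact: valid_nth Vb | exact: valid_nth Vc].
Qed.

Lemma weight_tovec m l : valid m l -> weight (tovec m l) = count (fun x => x != 0) l.
Proof.
move=> V; rewrite /weight cardsE cardE /enum_mem size_filter -enumT /=.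
have -> : count (mem [pred i : 'I_m | val (tovec m l i) != 0]) (enum 'I_m)
        = count (fun i : 'I_m => nth 0 l i != 0) (enum 'I_m).
  apply: eq_count => i /=; rewrite unfold_in /=.
  by have -> := val_tovec i V.
rewrite -(count_map val (fun i => nth 0 l i != 0)) val_enum_ord.
rewrite -(valid_size V) -[in RHS](mkseq_nth 0 l) /mkseq count_map.
by apply: eq_count.
Qed.

Lemma main_gen m w (L : seq (seq nat)) :
  all (valid m) L -> uniq L -> size L = 'C(m, w) ->
  all (fun l => count (fun x => x != 0) l == w) L ->
  pairw c1 L -> trip c2l L ->
  admissible_of_type m w.
Proof.
move=> Hv Hu Hsz Hw Hp Ht.
have HvL : forall a, a \in L -> valid m a by move=> a Ha; apply: (allP Hv).
have Hinj : {in L &, injective (@tovec m)}.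
  by move=> a b Ha Hb; apply: tovec_inj; rewrite unfold_in; apply: HvL.
have Hmu : uniq (map (@tovec m) L) by rewrite map_inj_in_uniq.
exists [set x in map (@tovec m) L]; split.
- split.
  + move=> s s'; rewrite !inE => /mapP [a Ha ->] /mapP [b Hb ->] ne.
    have nab : a != b by apply: contraNneq ne => ->.
    apply: c1_cond1; try apply: HvL => //.
    by apply: (pairwP (Q := c1) (s := L)) => // x y; rewrite /c1 andbC.
  + move=> s s' s''; rewrite !inE => /mapP [a Ha ->] /mapP [b Hb ->] /mapP [c Hc ->] n1 n2 n3.
    have nab : a != b by apply: contraNneq n1 => ->.
    have nac : a != c by apply: contraNneq n2 => ->.
    have nbc : b != c by apply: contraNneq n3 => ->.
    apply: c2_cond2; try apply: HvL => //.
    by apply: (tripP (R := c2l) (s := L)) => //; [apply: c2lC1 | apply: c2lC2].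
- by rewrite cardsE; move/card_uniqP: Hmu => ->; rewrite size_map.
- move=> s; rewrite inE => /mapP [a Ha ->]. rewrite weight_tovec; last exact: HvL. by move/allP: Hw => /(_ _ Ha) /eqP.
Qed.

Definition L11_7 : seq (seq nat) := [:: [:: 1; 2; 2; 2; 1; 2; 1; 0; 0; 0; 0];
 [:: 2; 2; 1; 1; 1; 2; 0; 2; 0; 0; 0];
 [:: 2; 1; 1; 1; 2; 0; 2; 2; 0; 0; 0];
 [:: 1; 2; 1; 1; 0; 1; 1; 1; 0; 0; 0];
 [:: 1; 1; 2; 0; 2; 2; 1; 2; 0; 0; 0];
 [:: 2; 2; 0; 2; 1; 1; 2; 1; 0; 0; 0];
 [:: 1; 0; 1; 1; 2; 1; 1; 1; 0; 0; 0];
 [:: 0; 1; 2; 2; 2; 1; 2; 1; 0; 0; 0];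
 [:: 2; 1; 2; 2; 1; 2; 0; 0; 1; 0; 0];
 [:: 1; 2; 2; 2; 1; 0; 1; 0; 2; 0; 0];
 [:: 1; 2; 2; 1; 0; 2; 2; 0; 1; 0; 0];
 [:: 2; 1; 2; 0; 1; 2; 2; 0; 1; 0; 0];
 [:: 1; 2; 0; 1; 2; 2; 2; 0; 1; 0; 0];
 [:: 2; 0; 2; 1; 1; 1; 2; 0; 2; 0; 0];
 [:: 0; 2; 2; 1; 1; 1; 2; 0; 2; 0; 0];
 [:: 2; 2; 1; 2; 2; 0; 0; 1; 1; 0; 0];
 [:: 2; 2; 1; 2; 0; 2; 0; 1; 1; 0; 0];
 [:: 2; 1; 2; 0; 1; 2; 0; 2; 1; 0; 0];
 [:: 2; 2; 0; 1; 2; 1; 0; 2; 1; 0; 0];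
 [:: 2; 0; 2; 1; 2; 1; 0; 2; 1; 0; 0];
 [:: 0; 2; 1; 1; 1; 2; 0; 2; 2; 0; 0];
 [:: 1; 1; 2; 1; 0; 0; 2; 2; 2; 0; 0];
 [:: 2; 2; 1; 0; 1; 0; 1; 2; 2; 0; 0];
 [:: 2; 1; 0; 1; 1; 0; 1; 1; 1; 0; 0];
 [:: 1; 0; 2; 2; 2; 0; 2; 1; 1; 0; 0];
 [:: 0; 1; 2; 1; 1; 0; 1; 1; 1; 0; 0];
 [:: 2; 2; 2; 0; 0; 1; 1; 2; 1; 0; 0];
 [:: 2; 1; 0; 2; 0; 1; 1; 2; 2; 0; 0];
 [:: 1; 0; 1; 1; 0; 1; 1; 1; 2; 0; 0];
 [:: 0; 1; 1; 2; 0; 2; 2; 1; 2; 0; 0];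
 [:: 1; 1; 0; 0; 2; 2; 1; 2; 2; 0; 0];
 [:: 2; 0; 1; 0; 1; 2; 1; 2; 2; 0; 0];
 [:: 0; 2; 2; 0; 2; 1; 1; 2; 1; 0; 0];
 [:: 1; 0; 0; 2; 1; 2; 2; 1; 2; 0; 0];
 [:: 0; 1; 0; 1; 1; 2; 1; 1; 1; 0; 0];
 [:: 0; 0; 1; 2; 2; 2; 1; 2; 1; 0; 0];
 [:: 1; 1; 2; 1; 1; 1; 0; 0; 0; 1; 0];
 [:: 2; 1; 1; 1; 2; 0; 2; 0; 0; 2; 0];
 [:: 2; 1; 2; 1; 0; 2; 1; 0; 0; 2; 0];
 [:: 2; 2; 2; 0; 2; 1; 1; 0; 0; 1; 0];
 [:: 1; 1; 0; 1; 1; 1; 2; 0; 0; 1; 0];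
 [:: 1; 0; 1; 2; 1; 2; 2; 0; 0; 2; 0];
 [:: 0; 2; 1; 2; 2; 1; 2; 0; 0; 1; 0];
 [:: 1; 2; 1; 2; 2; 0; 0; 2; 0; 1; 0];
 [:: 2; 1; 1; 2; 0; 1; 0; 2; 0; 2; 0];
 [:: 1; 2; 2; 0; 2; 2; 0; 1; 0; 1; 0];
 [:: 1; 1; 0; 1; 1; 1; 0; 2; 0; 1; 0];
 [:: 2; 0; 2; 1; 1; 2; 0; 1; 0; 2; 0];
 [:: 0; 1; 2; 2; 2; 1; 0; 1; 0; 2; 0];
 [:: 1; 1; 2; 2; 0; 0; 2; 1; 0; 2; 0];
 [:: 2; 1; 2; 0; 1; 0; 2; 2; 0; 1; 0];
 [:: 1; 1; 0; 2; 2; 0; 2; 1; 0; 2; 0];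
 [:: 1; 0; 1; 2; 2; 0; 2; 2; 0; 1; 0];
 [:: 0; 1; 2; 2; 1; 0; 2; 2; 0; 1; 0];
 [:: 1; 2; 2; 0; 0; 2; 2; 1; 0; 1; 0];
 [:: 2; 2; 0; 1; 0; 2; 1; 2; 0; 1; 0];
 [:: 1; 0; 1; 1; 0; 1; 1; 1; 0; 2; 0];
 [:: 0; 2; 1; 2; 0; 1; 2; 2; 0; 1; 0];
 [:: 1; 1; 0; 0; 2; 2; 1; 2; 0; 2; 0];
 [:: 2; 0; 2; 0; 2; 1; 1; 2; 0; 1; 0];
 [:: 0; 1; 2; 0; 1; 2; 2; 2; 0; 1; 0];
 [:: 2; 0; 0; 1; 2; 2; 2; 1; 0; 1; 0];
 [:: 0; 2; 0; 2; 1; 1; 1; 2; 0; 2; 0];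
 [:: 0; 0; 2; 2; 1; 1; 1; 2; 0; 2; 0];
 [:: 2; 1; 1; 2; 1; 0; 0; 0; 2; 2; 0];
 [:: 1; 2; 2; 2; 0; 1; 0; 0; 1; 2; 0];
 [:: 1; 2; 1; 0; 2; 1; 0; 0; 2; 2; 0];
 [:: 1; 1; 0; 1; 1; 1; 0; 0; 2; 1; 0];
 [:: 2; 0; 1; 1; 2; 2; 0; 0; 2; 1; 0];
 [:: 0; 2; 2; 1; 2; 2; 0; 0; 1; 1; 0];
 [:: 1; 1; 1; 2; 0; 0; 1; 0; 1; 1; 0];
 [:: 1; 1; 1; 0; 2; 0; 1; 0; 1; 1; 0];
 [:: 2; 2; 0; 2; 1; 0; 2; 0; 1; 1; 0];
 [:: 1; 0; 2; 1; 2; 0; 1; 0; 2; 2; 0];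
 [:: 0; 2; 2; 1; 2; 0; 2; 0; 1; 1; 0];
 [:: 1; 1; 1; 0; 0; 2; 1; 0; 1; 1; 0];
 [:: 2; 1; 0; 2; 0; 1; 1; 0; 2; 2; 0];
 [:: 2; 0; 1; 1; 0; 2; 2; 0; 2; 1; 0];
 [:: 0; 2; 1; 2; 0; 1; 2; 0; 2; 1; 0];
 [:: 2; 1; 0; 0; 2; 1; 2; 0; 1; 2; 0];
 [:: 1; 0; 1; 0; 1; 2; 2; 0; 2; 2; 0];
 [:: 0; 2; 2; 0; 1; 2; 1; 0; 2; 1; 0];
 [:: 1; 0; 0; 1; 2; 2; 1; 0; 2; 2; 0];
 [:: 0; 2; 0; 2; 1; 2; 1; 0; 2; 1; 0];
 [:: 0; 0; 2; 1; 1; 1; 2; 0; 2; 2; 0];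
 [:: 2; 2; 1; 2; 0; 0; 0; 1; 1; 2; 0];
 [:: 1; 2; 2; 0; 1; 0; 0; 2; 1; 2; 0];
 [:: 1; 2; 0; 2; 1; 0; 0; 2; 1; 2; 0];
 [:: 1; 0; 1; 2; 2; 0; 0; 2; 2; 1; 0];
 [:: 0; 1; 1; 2; 1; 0; 0; 2; 2; 2; 0];
 [:: 2; 1; 1; 0; 0; 1; 0; 2; 2; 2; 0];
 [:: 2; 2; 0; 1; 0; 1; 0; 1; 2; 2; 0];
 [:: 1; 0; 2; 2; 0; 1; 0; 2; 1; 2; 0];
 [:: 0; 2; 2; 1; 0; 1; 0; 1; 2; 2; 0];
 [:: 2; 1; 0; 0; 2; 2; 0; 1; 2; 1; 0];
 [:: 2; 0; 1; 0; 1; 1; 0; 1; 1; 1; 0];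
 [:: 0; 2; 1; 0; 1; 1; 0; 1; 1; 1; 0];
 [:: 1; 0; 0; 2; 1; 2; 0; 1; 2; 2; 0];
 [:: 0; 1; 0; 2; 2; 2; 0; 2; 1; 1; 0];
 [:: 0; 0; 1; 2; 1; 1; 0; 1; 1; 1; 0];
 [:: 1; 1; 1; 0; 0; 0; 1; 2; 1; 1; 0];
 [:: 2; 2; 0; 1; 0; 0; 1; 2; 2; 1; 0];
 [:: 2; 0; 1; 1; 0; 0; 2; 2; 1; 2; 0];
 [:: 0; 2; 2; 2; 0; 0; 1; 1; 2; 1; 0];
 [:: 2; 1; 0; 0; 2; 0; 2; 1; 2; 1; 0];
 [:: 1; 0; 2; 0; 2; 0; 2; 1; 1; 2; 0];
 [:: 0; 2; 1; 0; 2; 0; 1; 1; 2; 2; 0];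
 [:: 1; 0; 0; 1; 2; 0; 1; 2; 2; 2; 0];
 [:: 0; 1; 0; 1; 1; 0; 1; 1; 1; 2; 0];
 [:: 0; 0; 1; 1; 2; 0; 2; 2; 1; 2; 0];
 [:: 2; 2; 0; 0; 0; 2; 1; 1; 1; 2; 0];
 [:: 1; 0; 2; 0; 0; 1; 2; 2; 2; 1; 0];
 [:: 0; 1; 1; 0; 0; 2; 2; 1; 2; 2; 0];
 [:: 2; 0; 0; 2; 0; 2; 1; 1; 1; 2; 0];
 [:: 0; 2; 0; 1; 0; 1; 2; 1; 2; 2; 0];
 [:: 0; 0; 2; 2; 0; 2; 1; 1; 2; 1; 0];
 [:: 2; 0; 0; 0; 2; 2; 1; 1; 1; 2; 0];
 [:: 0; 1; 0; 0; 2; 1; 2; 2; 1; 2; 0];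
 [:: 0; 0; 1; 0; 1; 1; 2; 1; 1; 1; 0];
 [:: 0; 0; 0; 1; 2; 2; 2; 1; 2; 1; 0];
 [:: 2; 2; 2; 1; 2; 1; 0; 0; 0; 0; 1];
 [:: 2; 1; 1; 1; 2; 0; 2; 0; 0; 0; 2];
 [:: 1; 1; 1; 2; 0; 2; 2; 0; 0; 0; 2];
 [:: 2; 1; 1; 0; 1; 1; 1; 0; 0; 0; 1];
 [:: 1; 2; 0; 2; 2; 1; 2; 0; 0; 0; 1];
 [:: 2; 0; 2; 1; 1; 2; 1; 0; 0; 0; 2];
 [:: 0; 1; 1; 2; 1; 1; 1; 0; 0; 0; 1];
 [:: 1; 2; 2; 1; 2; 0; 0; 1; 0; 0; 2];
 [:: 2; 2; 2; 1; 0; 1; 0; 2; 0; 0; 1];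
 [:: 2; 2; 1; 0; 2; 2; 0; 1; 0; 0; 1];
 [:: 1; 2; 0; 1; 2; 2; 0; 1; 0; 0; 2];
 [:: 2; 0; 1; 2; 2; 2; 0; 1; 0; 0; 1];
 [:: 0; 2; 1; 1; 1; 2; 0; 2; 0; 0; 2];
 [:: 2; 1; 2; 2; 0; 0; 1; 1; 0; 0; 2];
 [:: 2; 1; 2; 0; 2; 0; 1; 1; 0; 0; 2];
 [:: 1; 2; 0; 1; 2; 0; 2; 1; 0; 0; 2];
 [:: 2; 0; 1; 2; 1; 0; 2; 1; 0; 0; 2];
 [:: 0; 2; 1; 2; 1; 0; 2; 1; 0; 0; 2];
 [:: 1; 2; 1; 0; 0; 2; 2; 2; 0; 0; 1];
 [:: 2; 1; 0; 1; 0; 1; 2; 2; 0; 0; 2];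
 [:: 1; 0; 1; 1; 0; 1; 1; 1; 0; 0; 2];
 [:: 0; 2; 2; 2; 0; 2; 1; 1; 0; 0; 1];
 [:: 2; 2; 0; 0; 1; 1; 2; 1; 0; 0; 2];
 [:: 1; 0; 2; 0; 1; 1; 2; 2; 0; 0; 2];
 [:: 0; 1; 1; 0; 1; 1; 1; 2; 0; 0; 1];
 [:: 1; 0; 0; 2; 2; 1; 2; 2; 0; 0; 1];
 [:: 0; 1; 0; 1; 2; 1; 2; 2; 0; 0; 2];
 [:: 0; 0; 2; 1; 2; 2; 1; 2; 0; 0; 1];
 [:: 1; 2; 1; 1; 1; 0; 0; 0; 1; 0; 1];
 [:: 1; 1; 1; 2; 0; 2; 0; 0; 2; 0; 2];
 [:: 1; 2; 1; 0; 2; 1; 0; 0; 2; 0; 2];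
 [:: 2; 2; 0; 2; 1; 1; 0; 0; 1; 0; 2];
 [:: 1; 0; 1; 1; 1; 2; 0; 0; 1; 0; 1];
 [:: 0; 1; 2; 1; 2; 2; 0; 0; 2; 0; 1];
 [:: 2; 1; 2; 2; 0; 0; 2; 0; 1; 0; 1];
 [:: 1; 1; 2; 0; 1; 0; 2; 0; 2; 0; 2];
 [:: 2; 2; 0; 2; 2; 0; 1; 0; 1; 0; 1];
 [:: 1; 0; 1; 1; 1; 0; 2; 0; 1; 0; 1];
 [:: 0; 2; 1; 1; 2; 0; 1; 0; 2; 0; 2];
 [:: 1; 2; 2; 0; 0; 2; 1; 0; 2; 0; 1];
 [:: 1; 2; 0; 1; 0; 2; 2; 0; 1; 0; 2];
 [:: 1; 0; 2; 2; 0; 2; 1; 0; 2; 0; 1];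
 [:: 0; 1; 2; 2; 0; 2; 2; 0; 1; 0; 1];
 [:: 2; 2; 0; 0; 2; 2; 1; 0; 1; 0; 1];
 [:: 2; 0; 1; 0; 2; 1; 2; 0; 1; 0; 2];
 [:: 0; 1; 1; 0; 1; 1; 1; 0; 2; 0; 1];
 [:: 1; 0; 0; 2; 2; 1; 2; 0; 2; 0; 1];
 [:: 0; 2; 0; 2; 1; 1; 2; 0; 1; 0; 2];
 [:: 0; 0; 1; 2; 2; 2; 1; 0; 1; 0; 2];
 [:: 1; 1; 2; 1; 0; 0; 0; 2; 2; 0; 2];
 [:: 2; 2; 2; 0; 1; 0; 0; 1; 2; 0; 1];
 [:: 2; 1; 0; 2; 1; 0; 0; 2; 2; 0; 1];
 [:: 1; 0; 1; 1; 1; 0; 0; 2; 1; 0; 1];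
 [:: 0; 1; 1; 2; 2; 0; 0; 2; 1; 0; 2];
 [:: 1; 1; 2; 0; 0; 1; 0; 1; 1; 0; 1];
 [:: 1; 1; 0; 2; 0; 1; 0; 1; 1; 0; 1];
 [:: 2; 0; 2; 1; 0; 2; 0; 1; 1; 0; 2];
 [:: 0; 2; 1; 2; 0; 1; 0; 2; 2; 0; 1];
 [:: 1; 1; 0; 0; 2; 1; 0; 1; 1; 0; 1];
 [:: 1; 0; 2; 0; 1; 1; 0; 2; 2; 0; 2];
 [:: 0; 1; 1; 0; 2; 2; 0; 2; 1; 0; 2];
 [:: 1; 0; 0; 2; 1; 2; 0; 1; 2; 0; 2];
 [:: 0; 1; 0; 1; 2; 2; 0; 2; 2; 0; 1];
 [:: 0; 0; 1; 2; 2; 1; 0; 2; 2; 0; 1];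
 [:: 2; 1; 2; 0; 0; 0; 1; 1; 2; 0; 2];
 [:: 2; 2; 0; 1; 0; 0; 2; 1; 2; 0; 1];
 [:: 2; 0; 2; 1; 0; 0; 2; 1; 2; 0; 1];
 [:: 0; 1; 2; 2; 0; 0; 2; 2; 1; 0; 1];
 [:: 1; 1; 0; 0; 1; 0; 2; 2; 2; 0; 2];
 [:: 2; 0; 1; 0; 1; 0; 1; 2; 2; 0; 2];
 [:: 0; 2; 2; 0; 1; 0; 2; 1; 2; 0; 1];
 [:: 1; 0; 0; 2; 2; 0; 1; 2; 1; 0; 2];
 [:: 0; 1; 0; 1; 1; 0; 1; 1; 1; 0; 2];
 [:: 0; 0; 2; 1; 2; 0; 1; 2; 2; 0; 1];
 [:: 1; 1; 0; 0; 0; 1; 2; 1; 1; 0; 1];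
 [:: 2; 0; 1; 0; 0; 1; 2; 2; 1; 0; 2];
 [:: 0; 1; 1; 0; 0; 2; 2; 1; 2; 0; 2];
 [:: 1; 0; 0; 2; 0; 2; 1; 2; 1; 0; 2];
 [:: 0; 2; 0; 2; 0; 2; 1; 1; 2; 0; 1];
 [:: 0; 0; 1; 2; 0; 1; 2; 2; 2; 0; 1];
 [:: 2; 0; 0; 0; 2; 1; 1; 1; 2; 0; 2];
 [:: 0; 2; 0; 0; 1; 2; 2; 2; 1; 0; 1];
 [:: 0; 0; 2; 0; 2; 1; 1; 1; 2; 0; 2];
 [:: 0; 0; 0; 2; 2; 1; 1; 1; 2; 0; 2];
 [:: 2; 2; 1; 2; 1; 0; 0; 0; 0; 1; 2];
 [:: 1; 1; 1; 2; 0; 2; 0; 0; 0; 2; 2];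
 [:: 1; 1; 2; 0; 2; 2; 0; 0; 0; 2; 1];
 [:: 1; 1; 0; 1; 1; 1; 0; 0; 0; 1; 2];
 [:: 2; 0; 2; 2; 1; 2; 0; 0; 0; 1; 1];
 [:: 0; 2; 1; 1; 2; 1; 0; 0; 0; 2; 2];
 [:: 2; 2; 1; 2; 0; 0; 1; 0; 0; 2; 1];
 [:: 2; 2; 1; 0; 1; 0; 2; 0; 0; 1; 2];
 [:: 2; 1; 0; 2; 2; 0; 1; 0; 0; 1; 2];
 [:: 2; 0; 1; 2; 2; 0; 1; 0; 0; 2; 1];
 [:: 0; 1; 2; 2; 2; 0; 1; 0; 0; 1; 2];
 [:: 1; 2; 2; 0; 0; 1; 1; 0; 0; 2; 2];
 [:: 1; 2; 0; 2; 0; 1; 1; 0; 0; 2; 2];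
 [:: 2; 0; 1; 2; 0; 2; 1; 0; 0; 2; 1];
 [:: 0; 1; 2; 1; 0; 2; 1; 0; 0; 2; 2];
 [:: 2; 1; 0; 0; 2; 2; 2; 0; 0; 1; 1];
 [:: 1; 0; 1; 0; 1; 2; 2; 0; 0; 2; 2];
 [:: 0; 1; 1; 0; 1; 1; 1; 0; 0; 2; 1];
 [:: 2; 0; 0; 1; 1; 2; 1; 0; 0; 2; 2];
 [:: 0; 2; 0; 1; 1; 2; 2; 0; 0; 2; 1];
 [:: 0; 0; 2; 2; 1; 2; 2; 0; 0; 1; 1];
 [:: 2; 1; 1; 1; 0; 0; 0; 1; 0; 1; 1];
 [:: 1; 1; 2; 0; 2; 0; 0; 2; 0; 2; 1];
 [:: 2; 1; 0; 2; 1; 0; 0; 2; 0; 2; 1];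
 [:: 2; 0; 2; 1; 1; 0; 0; 1; 0; 2; 2];
 [:: 0; 1; 1; 1; 2; 0; 0; 1; 0; 1; 1];
 [:: 1; 2; 2; 0; 0; 2; 0; 1; 0; 1; 2];
 [:: 1; 2; 0; 1; 0; 2; 0; 2; 0; 2; 1];
 [:: 2; 0; 2; 2; 0; 1; 0; 1; 0; 1; 2];
 [:: 0; 1; 1; 1; 0; 2; 0; 1; 0; 1; 1];
 [:: 2; 2; 0; 0; 2; 1; 0; 2; 0; 1; 1];
 [:: 2; 0; 1; 0; 2; 2; 0; 1; 0; 2; 1];
 [:: 0; 2; 2; 0; 2; 1; 0; 2; 0; 1; 1];
 [:: 2; 0; 0; 2; 2; 1; 0; 1; 0; 1; 2];
 [:: 0; 1; 0; 2; 1; 2; 0; 1; 0; 2; 2];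
 [:: 0; 0; 2; 2; 1; 2; 0; 2; 0; 1; 1];
 [:: 1; 2; 1; 0; 0; 0; 2; 2; 0; 2; 1];
 [:: 2; 2; 0; 1; 0; 0; 1; 2; 0; 1; 2];
 [:: 1; 0; 2; 1; 0; 0; 2; 2; 0; 1; 2];
 [:: 0; 1; 1; 1; 0; 0; 2; 1; 0; 1; 1];
 [:: 1; 2; 0; 0; 1; 0; 1; 1; 0; 1; 1];
 [:: 1; 0; 2; 0; 1; 0; 1; 1; 0; 1; 1];
 [:: 0; 2; 1; 0; 2; 0; 1; 1; 0; 2; 2];
 [:: 1; 0; 0; 2; 1; 0; 1; 1; 0; 1; 1];
 [:: 0; 2; 0; 1; 1; 0; 2; 2; 0; 2; 1];
 [:: 0; 0; 2; 1; 2; 0; 1; 2; 0; 2; 1];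
 [:: 1; 2; 0; 0; 0; 1; 1; 2; 0; 2; 2];
 [:: 2; 0; 1; 0; 0; 2; 1; 2; 0; 1; 2];
 [:: 0; 2; 1; 0; 0; 2; 1; 2; 0; 1; 2];
 [:: 1; 0; 0; 1; 0; 2; 2; 2; 0; 2; 1];
 [:: 0; 1; 0; 1; 0; 1; 2; 2; 0; 2; 2];
 [:: 0; 0; 2; 2; 0; 1; 2; 1; 0; 2; 1];
 [:: 1; 0; 0; 0; 1; 2; 1; 1; 0; 1; 1];
 [:: 0; 1; 0; 0; 1; 2; 2; 1; 0; 2; 2];
 [:: 0; 0; 2; 0; 2; 1; 2; 1; 0; 2; 1];
 [:: 0; 0; 0; 2; 1; 1; 1; 2; 0; 2; 2];
 [:: 2; 1; 2; 1; 0; 0; 0; 0; 1; 2; 2];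
 [:: 1; 1; 2; 0; 2; 0; 0; 0; 2; 2; 1];
 [:: 1; 2; 0; 2; 2; 0; 0; 0; 2; 1; 1];
 [:: 1; 0; 1; 1; 1; 0; 0; 0; 1; 2; 1];
 [:: 0; 2; 2; 1; 2; 0; 0; 0; 1; 1; 2];
 [:: 2; 1; 2; 0; 0; 1; 0; 0; 2; 1; 2];
 [:: 2; 1; 0; 1; 0; 2; 0; 0; 1; 2; 2];
 [:: 1; 0; 2; 2; 0; 1; 0; 0; 1; 2; 2];
 [:: 0; 1; 2; 2; 0; 1; 0; 0; 2; 1; 2];
 [:: 2; 2; 0; 0; 1; 1; 0; 0; 2; 2; 1];
 [:: 2; 0; 2; 0; 1; 1; 0; 0; 2; 2; 1];
 [:: 0; 1; 2; 0; 2; 1; 0; 0; 2; 1; 2];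
 [:: 1; 0; 0; 2; 2; 2; 0; 0; 1; 1; 2];
 [:: 0; 1; 0; 1; 2; 2; 0; 0; 2; 2; 1];
 [:: 0; 0; 1; 1; 2; 1; 0; 0; 2; 2; 2];
 [:: 1; 1; 1; 0; 0; 0; 1; 0; 1; 1; 2];
 [:: 1; 2; 0; 2; 0; 0; 2; 0; 2; 1; 1];
 [:: 1; 0; 2; 1; 0; 0; 2; 0; 2; 1; 2];
 [:: 0; 2; 1; 1; 0; 0; 1; 0; 2; 2; 2];
 [:: 2; 2; 0; 0; 2; 0; 1; 0; 1; 2; 1];
 [:: 2; 0; 1; 0; 2; 0; 2; 0; 2; 1; 1];
 [:: 0; 2; 2; 0; 1; 0; 1; 0; 1; 2; 2];
 [:: 2; 0; 0; 2; 1; 0; 2; 0; 1; 1; 2];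
 [:: 0; 1; 0; 2; 2; 0; 1; 0; 2; 1; 2];
 [:: 0; 0; 2; 2; 1; 0; 1; 0; 1; 2; 2];
 [:: 2; 1; 0; 0; 0; 2; 2; 0; 2; 1; 1];
 [:: 2; 0; 1; 0; 0; 1; 2; 0; 1; 2; 2];
 [:: 0; 2; 1; 0; 0; 2; 2; 0; 1; 2; 1];
 [:: 2; 0; 0; 1; 0; 1; 1; 0; 1; 1; 1];
 [:: 0; 2; 0; 1; 0; 1; 1; 0; 1; 1; 1];
 [:: 0; 0; 2; 1; 0; 1; 1; 0; 1; 1; 1];
 [:: 2; 0; 0; 0; 1; 1; 2; 0; 2; 2; 1];
 [:: 0; 1; 0; 0; 2; 1; 2; 0; 1; 2; 2];
 [:: 0; 0; 1; 0; 2; 2; 2; 0; 2; 1; 1];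
 [:: 0; 0; 0; 1; 2; 1; 1; 0; 1; 1; 1];
 [:: 1; 2; 1; 0; 0; 0; 0; 1; 2; 2; 2];
 [:: 1; 2; 0; 2; 0; 0; 0; 2; 2; 1; 1];
 [:: 2; 0; 2; 2; 0; 0; 0; 2; 1; 1; 1];
 [:: 0; 1; 1; 1; 0; 0; 0; 1; 2; 1; 1];
 [:: 1; 2; 0; 0; 1; 0; 0; 2; 1; 2; 2];
 [:: 1; 0; 1; 0; 2; 0; 0; 1; 2; 2; 2];
 [:: 0; 2; 2; 0; 1; 0; 0; 1; 2; 2; 1];
 [:: 2; 0; 0; 1; 1; 0; 0; 2; 2; 1; 2];
 [:: 0; 2; 0; 1; 1; 0; 0; 2; 2; 1; 2];
 [:: 0; 0; 2; 2; 2; 0; 0; 1; 1; 2; 1];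
 [:: 1; 1; 0; 0; 0; 1; 0; 1; 1; 2; 1];
 [:: 2; 0; 2; 0; 0; 2; 0; 2; 1; 1; 1];
 [:: 0; 2; 1; 0; 0; 2; 0; 2; 1; 2; 1];
 [:: 2; 0; 0; 2; 0; 1; 0; 1; 2; 1; 2];
 [:: 0; 1; 0; 2; 0; 2; 0; 2; 1; 1; 2];
 [:: 0; 0; 2; 1; 0; 2; 0; 1; 1; 2; 2];
 [:: 1; 0; 0; 0; 2; 2; 0; 2; 1; 1; 2];
 [:: 0; 1; 0; 0; 1; 2; 0; 1; 2; 2; 2];
 [:: 0; 0; 1; 0; 1; 1; 0; 1; 1; 1; 2];
 [:: 0; 0; 0; 1; 1; 2; 0; 2; 2; 1; 2];
 [:: 2; 1; 0; 0; 0; 0; 1; 2; 2; 2; 1];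
 [:: 2; 0; 2; 0; 0; 0; 2; 2; 1; 1; 1];
 [:: 0; 2; 2; 0; 0; 0; 2; 1; 1; 1; 2];
 [:: 2; 0; 0; 1; 0; 0; 2; 1; 2; 2; 1];
 [:: 0; 1; 0; 2; 0; 0; 1; 2; 2; 2; 1];
 [:: 0; 0; 1; 1; 0; 0; 2; 2; 1; 2; 2];
 [:: 1; 0; 0; 0; 1; 0; 1; 1; 2; 1; 1];
 [:: 0; 2; 0; 0; 2; 0; 2; 1; 1; 1; 2];
 [:: 0; 0; 2; 0; 1; 0; 1; 2; 1; 2; 2];
 [:: 0; 0; 0; 2; 2; 0; 2; 1; 1; 2; 1];
 [:: 1; 0; 0; 0; 0; 1; 2; 2; 2; 1; 2];
 [:: 0; 2; 0; 0; 0; 2; 2; 1; 1; 1; 2];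
 [:: 0; 0; 1; 0; 0; 2; 1; 2; 2; 1; 2];
 [:: 0; 0; 0; 1; 0; 1; 1; 2; 1; 1; 1];
 [:: 0; 0; 0; 0; 1; 2; 2; 2; 1; 2; 1]].

Lemma adm_11_7 : admissible_of_type 11 7.
Proof.
apply: (@main_gen 11 7 L11_7).
- by vm_compute.
- by vm_compute.
- by vm_compute.
- by vm_compute.
- by vm_compute.
- by vm_compute.
Qed.

Definition L11_6 : seq (seq nat) := [:: [:: 1; 1; 2; 1; 2; 2; 0; 0; 0; 0; 0];
 [:: 1; 2; 2; 2; 1; 0; 1; 0; 0; 0; 0];
 [:: 1; 1; 2; 1; 0; 1; 2; 0; 0; 0; 0];
 [:: 1; 1; 2; 0; 1; 1; 2; 0; 0; 0; 0];
 [:: 1; 1; 0; 2; 1; 2; 2; 0; 0; 0; 0];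
 [:: 2; 0; 1; 2; 1; 1; 2; 0; 0; 0; 0];
 [:: 0; 1; 1; 2; 1; 2; 2; 0; 0; 0; 0];
 [:: 2; 2; 2; 1; 2; 0; 0; 2; 0; 0; 0];
 [:: 1; 2; 1; 2; 0; 1; 0; 2; 0; 0; 0];
 [:: 1; 1; 1; 0; 1; 2; 0; 1; 0; 0; 0];
 [:: 2; 1; 0; 1; 1; 2; 0; 1; 0; 0; 0];
 [:: 2; 0; 1; 2; 1; 1; 0; 1; 0; 0; 0];
 [:: 0; 1; 2; 2; 2; 1; 0; 1; 0; 0; 0];
 [:: 2; 1; 1; 2; 0; 0; 1; 2; 0; 0; 0];
 [:: 2; 2; 2; 0; 2; 0; 1; 2; 0; 0; 0];
 [:: 1; 1; 0; 1; 1; 0; 2; 2; 0; 0; 0];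
 [:: 2; 0; 1; 2; 2; 0; 1; 1; 0; 0; 0];
 [:: 0; 1; 1; 2; 1; 0; 1; 2; 0; 0; 0];
 [:: 2; 2; 1; 0; 0; 2; 1; 1; 0; 0; 0];
 [:: 2; 1; 0; 1; 0; 2; 1; 1; 0; 0; 0];
 [:: 1; 0; 1; 1; 0; 1; 1; 1; 0; 0; 0];
 [:: 0; 1; 1; 2; 0; 1; 1; 2; 0; 0; 0];
 [:: 2; 2; 0; 0; 1; 1; 2; 1; 0; 0; 0];
 [:: 1; 0; 2; 0; 1; 2; 1; 1; 0; 0; 0];
 [:: 0; 1; 1; 0; 2; 1; 2; 2; 0; 0; 0];
 [:: 1; 0; 0; 1; 1; 1; 2; 2; 0; 0; 0];
 [:: 0; 2; 0; 1; 2; 1; 1; 2; 0; 0; 0];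
 [:: 0; 0; 1; 1; 2; 1; 2; 2; 0; 0; 0];
 [:: 1; 1; 1; 2; 2; 0; 0; 0; 1; 0; 0];
 [:: 1; 2; 2; 2; 0; 2; 0; 0; 2; 0; 0];
 [:: 1; 2; 1; 0; 2; 1; 0; 0; 2; 0; 0];
 [:: 1; 1; 0; 2; 2; 2; 0; 0; 1; 0; 0];
 [:: 2; 0; 1; 2; 1; 1; 0; 0; 1; 0; 0];
 [:: 0; 2; 2; 2; 1; 2; 0; 0; 2; 0; 0];
 [:: 2; 1; 2; 1; 0; 0; 1; 0; 1; 0; 0];
 [:: 2; 2; 1; 0; 1; 0; 2; 0; 1; 0; 0];
 [:: 1; 1; 0; 2; 2; 0; 1; 0; 1; 0; 0];
 [:: 2; 0; 2; 1; 1; 0; 1; 0; 1; 0; 0];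
 [:: 0; 1; 2; 1; 2; 0; 1; 0; 2; 0; 0];
 [:: 2; 2; 1; 0; 0; 2; 1; 0; 1; 0; 0];
 [:: 2; 1; 0; 2; 0; 1; 1; 0; 2; 0; 0];
 [:: 1; 0; 1; 2; 0; 1; 2; 0; 2; 0; 0];
 [:: 0; 1; 1; 1; 0; 1; 2; 0; 1; 0; 0];
 [:: 2; 1; 0; 0; 2; 2; 2; 0; 2; 0; 0];
 [:: 2; 0; 1; 0; 2; 2; 2; 0; 2; 0; 0];
 [:: 0; 2; 1; 0; 1; 1; 2; 0; 1; 0; 0];
 [:: 2; 0; 0; 1; 2; 2; 2; 0; 2; 0; 0];
 [:: 0; 2; 0; 1; 2; 1; 1; 0; 1; 0; 0];
 [:: 0; 0; 1; 2; 2; 2; 1; 0; 1; 0; 0];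
 [:: 1; 1; 2; 1; 0; 0; 0; 2; 2; 0; 0];
 [:: 2; 2; 2; 0; 2; 0; 0; 2; 1; 0; 0];
 [:: 2; 2; 0; 1; 1; 0; 0; 1; 2; 0; 0];
 [:: 1; 0; 1; 1; 2; 0; 0; 1; 2; 0; 0];
 [:: 0; 2; 1; 1; 2; 0; 0; 1; 2; 0; 0];
 [:: 1; 1; 1; 0; 0; 2; 0; 2; 1; 0; 0];
 [:: 2; 1; 0; 1; 0; 2; 0; 1; 1; 0; 0];
 [:: 1; 0; 1; 2; 0; 2; 0; 2; 1; 0; 0];
 [:: 0; 2; 2; 2; 0; 2; 0; 1; 2; 0; 0];
 [:: 1; 2; 0; 0; 2; 2; 0; 1; 1; 0; 0];
 [:: 2; 0; 2; 0; 1; 1; 0; 1; 2; 0; 0];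
 [:: 0; 1; 1; 0; 1; 1; 0; 2; 2; 0; 0];
 [:: 2; 0; 0; 1; 2; 1; 0; 2; 1; 0; 0];
 [:: 0; 2; 0; 1; 2; 2; 0; 1; 1; 0; 0];
 [:: 0; 0; 1; 1; 2; 1; 0; 1; 2; 0; 0];
 [:: 2; 1; 1; 0; 0; 0; 2; 2; 1; 0; 0];
 [:: 2; 1; 0; 1; 0; 0; 2; 2; 1; 0; 0];
 [:: 2; 0; 2; 1; 0; 0; 1; 1; 1; 0; 0];
 [:: 0; 2; 2; 1; 0; 0; 2; 1; 1; 0; 0];
 [:: 1; 2; 0; 0; 1; 0; 1; 1; 2; 0; 0];
 [:: 1; 0; 2; 0; 2; 0; 2; 1; 1; 0; 0];
 [:: 0; 2; 1; 0; 1; 0; 2; 1; 1; 0; 0];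
 [:: 1; 0; 0; 1; 1; 0; 2; 2; 2; 0; 0];
 [:: 0; 1; 0; 1; 1; 0; 1; 1; 1; 0; 0];
 [:: 0; 0; 1; 1; 2; 0; 1; 1; 2; 0; 0];
 [:: 1; 2; 0; 0; 0; 2; 1; 1; 2; 0; 0];
 [:: 1; 0; 1; 0; 0; 2; 1; 2; 1; 0; 0];
 [:: 0; 2; 2; 0; 0; 1; 1; 2; 1; 0; 0];
 [:: 1; 0; 0; 2; 0; 1; 2; 1; 1; 0; 0];
 [:: 0; 1; 0; 2; 0; 1; 2; 1; 1; 0; 0];
 [:: 0; 0; 1; 1; 0; 2; 1; 2; 2; 0; 0];
 [:: 2; 0; 0; 0; 2; 2; 2; 1; 2; 0; 0];
 [:: 0; 1; 0; 0; 1; 1; 1; 2; 2; 0; 0];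
 [:: 0; 0; 2; 0; 1; 2; 1; 1; 2; 0; 0];
 [:: 0; 0; 0; 1; 1; 2; 1; 2; 2; 0; 0];
 [:: 1; 2; 1; 1; 2; 0; 0; 0; 0; 2; 0];
 [:: 1; 2; 1; 1; 0; 1; 0; 0; 0; 2; 0];
 [:: 1; 2; 2; 0; 1; 1; 0; 0; 0; 2; 0];
 [:: 1; 1; 0; 1; 1; 1; 0; 0; 0; 1; 0];
 [:: 2; 0; 1; 2; 1; 1; 0; 0; 0; 1; 0];
 [:: 0; 1; 1; 1; 2; 2; 0; 0; 0; 1; 0];
 [:: 1; 2; 1; 1; 0; 0; 1; 0; 0; 2; 0];
 [:: 2; 1; 1; 0; 1; 0; 1; 0; 0; 2; 0];
 [:: 1; 2; 0; 1; 2; 0; 2; 0; 0; 1; 0];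
 [:: 1; 0; 2; 2; 2; 0; 2; 0; 0; 2; 0];
 [:: 0; 1; 2; 2; 2; 0; 2; 0; 0; 2; 0];
 [:: 1; 1; 2; 0; 0; 1; 2; 0; 0; 1; 0];
 [:: 1; 2; 0; 2; 0; 2; 1; 0; 0; 1; 0];
 [:: 2; 0; 1; 1; 0; 1; 2; 0; 0; 2; 0];
 [:: 0; 1; 2; 1; 0; 2; 1; 0; 0; 2; 0];
 [:: 2; 1; 0; 0; 1; 1; 1; 0; 0; 2; 0];
 [:: 2; 0; 2; 0; 2; 1; 1; 0; 0; 1; 0];
 [:: 0; 1; 1; 0; 2; 2; 2; 0; 0; 1; 0];
 [:: 1; 0; 0; 2; 1; 2; 1; 0; 0; 1; 0];
 [:: 0; 2; 0; 1; 2; 1; 1; 0; 0; 1; 0];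
 [:: 0; 0; 2; 2; 2; 1; 2; 0; 0; 2; 0];
 [:: 1; 2; 1; 1; 0; 0; 0; 1; 0; 2; 0];
 [:: 2; 2; 2; 0; 2; 0; 0; 2; 0; 1; 0];
 [:: 1; 1; 0; 1; 2; 0; 0; 2; 0; 2; 0];
 [:: 2; 0; 2; 1; 1; 0; 0; 1; 0; 2; 0];
 [:: 0; 2; 1; 2; 1; 0; 0; 1; 0; 1; 0];
 [:: 2; 1; 1; 0; 0; 1; 0; 2; 0; 2; 0];
 [:: 1; 2; 0; 2; 0; 1; 0; 2; 0; 1; 0];
 [:: 1; 0; 1; 2; 0; 2; 0; 1; 0; 2; 0];
 [:: 0; 2; 2; 1; 0; 1; 0; 2; 0; 1; 0];
 [:: 1; 1; 0; 0; 2; 1; 0; 1; 0; 2; 0];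
 [:: 2; 0; 1; 0; 1; 2; 0; 2; 0; 1; 0];
 [:: 0; 1; 1; 0; 2; 2; 0; 1; 0; 1; 0];
 [:: 1; 0; 0; 2; 2; 1; 0; 1; 0; 2; 0];
 [:: 0; 2; 0; 2; 1; 1; 0; 1; 0; 1; 0];
 [:: 0; 0; 1; 2; 1; 2; 0; 1; 0; 2; 0];
 [:: 2; 1; 1; 0; 0; 0; 2; 1; 0; 1; 0];
 [:: 1; 1; 0; 2; 0; 0; 2; 1; 0; 2; 0];
 [:: 2; 0; 1; 1; 0; 0; 2; 1; 0; 1; 0];
 [:: 0; 2; 2; 1; 0; 0; 2; 1; 0; 1; 0];
 [:: 2; 1; 0; 0; 1; 0; 1; 2; 0; 2; 0];
 [:: 1; 0; 2; 0; 1; 0; 1; 2; 0; 2; 0];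
 [:: 0; 2; 1; 0; 2; 0; 1; 1; 0; 2; 0];
 [:: 1; 0; 0; 1; 1; 0; 2; 2; 0; 1; 0];
 [:: 0; 1; 0; 1; 2; 0; 1; 2; 0; 2; 0];
 [:: 0; 0; 1; 1; 1; 0; 1; 2; 0; 1; 0];
 [:: 1; 2; 0; 0; 0; 2; 2; 2; 0; 2; 0];
 [:: 2; 0; 1; 0; 0; 2; 2; 1; 0; 1; 0];
 [:: 0; 2; 1; 0; 0; 2; 2; 2; 0; 2; 0];
 [:: 1; 0; 0; 2; 0; 2; 1; 1; 0; 1; 0];
 [:: 0; 2; 0; 1; 0; 2; 2; 2; 0; 2; 0];
 [:: 0; 0; 2; 1; 0; 1; 1; 2; 0; 1; 0];
 [:: 2; 0; 0; 0; 1; 2; 1; 2; 0; 1; 0];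
 [:: 0; 2; 0; 0; 1; 2; 2; 2; 0; 2; 0];
 [:: 0; 0; 2; 0; 1; 2; 1; 1; 0; 1; 0];
 [:: 0; 0; 0; 1; 2; 2; 2; 1; 0; 1; 0];
 [:: 2; 1; 2; 2; 0; 0; 0; 0; 1; 1; 0];
 [:: 1; 1; 2; 0; 1; 0; 0; 0; 2; 1; 0];
 [:: 1; 1; 0; 2; 2; 0; 0; 0; 1; 1; 0];
 [:: 1; 0; 2; 1; 1; 0; 0; 0; 2; 1; 0];
 [:: 0; 1; 1; 2; 1; 0; 0; 0; 2; 2; 0];
 [:: 2; 2; 2; 0; 0; 1; 0; 0; 1; 1; 0];
 [:: 2; 2; 0; 1; 0; 1; 0; 0; 1; 1; 0];
 [:: 2; 0; 1; 1; 0; 2; 0; 0; 2; 1; 0];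
 [:: 0; 2; 2; 2; 0; 2; 0; 0; 2; 1; 0];
 [:: 1; 1; 0; 0; 1; 2; 0; 0; 2; 2; 0];
 [:: 1; 0; 2; 0; 1; 1; 0; 0; 2; 1; 0];
 [:: 0; 2; 2; 0; 1; 1; 0; 0; 1; 2; 0];
 [:: 1; 0; 0; 2; 2; 1; 0; 0; 2; 1; 0];
 [:: 0; 1; 0; 1; 1; 2; 0; 0; 1; 2; 0];
 [:: 0; 0; 2; 1; 1; 2; 0; 0; 1; 2; 0];
 [:: 1; 1; 1; 0; 0; 0; 1; 0; 1; 1; 0];
 [:: 1; 2; 0; 2; 0; 0; 1; 0; 1; 2; 0];
 [:: 2; 0; 2; 1; 0; 0; 1; 0; 1; 2; 0];
 [:: 0; 1; 1; 1; 0; 0; 2; 0; 2; 1; 0];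
 [:: 1; 2; 0; 0; 2; 0; 2; 0; 1; 1; 0];
 [:: 2; 0; 1; 0; 2; 0; 1; 0; 1; 2; 0];
 [:: 0; 2; 1; 0; 1; 0; 2; 0; 1; 1; 0];
 [:: 2; 0; 0; 2; 1; 0; 2; 0; 1; 1; 0];
 [:: 0; 1; 0; 1; 2; 0; 2; 0; 2; 1; 0];
 [:: 0; 0; 2; 2; 2; 0; 2; 0; 1; 2; 0];
 [:: 2; 2; 0; 0; 0; 1; 1; 0; 1; 1; 0];
 [:: 1; 0; 1; 0; 0; 1; 1; 0; 2; 2; 0];
 [:: 0; 1; 2; 0; 0; 2; 2; 0; 1; 1; 0];
 [:: 2; 0; 0; 1; 0; 1; 2; 0; 1; 2; 0];
 [:: 0; 2; 0; 2; 0; 1; 1; 0; 1; 2; 0];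
 [:: 0; 0; 1; 1; 0; 1; 1; 0; 2; 2; 0];
 [:: 1; 0; 0; 0; 1; 1; 1; 0; 1; 2; 0];
 [:: 0; 2; 0; 0; 1; 2; 1; 0; 2; 1; 0];
 [:: 0; 0; 2; 0; 1; 2; 2; 0; 1; 1; 0];
 [:: 0; 0; 0; 1; 1; 2; 1; 0; 1; 2; 0];
 [:: 1; 1; 2; 0; 0; 0; 0; 1; 1; 2; 0];
 [:: 1; 2; 0; 1; 0; 0; 0; 1; 1; 1; 0];
 [:: 2; 0; 1; 2; 0; 0; 0; 2; 2; 2; 0];
 [:: 0; 2; 1; 1; 0; 0; 0; 2; 2; 1; 0];
 [:: 2; 1; 0; 0; 2; 0; 0; 1; 2; 1; 0];
 [:: 1; 0; 2; 0; 1; 0; 0; 2; 2; 1; 0];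
 [:: 0; 2; 1; 0; 1; 0; 0; 2; 2; 1; 0];
 [:: 2; 0; 0; 2; 1; 0; 0; 2; 2; 2; 0];
 [:: 0; 2; 0; 2; 1; 0; 0; 1; 1; 1; 0];
 [:: 0; 0; 2; 2; 1; 0; 0; 2; 1; 1; 0];
 [:: 1; 1; 0; 0; 0; 2; 0; 1; 2; 2; 0];
 [:: 1; 0; 1; 0; 0; 2; 0; 2; 1; 1; 0];
 [:: 0; 1; 2; 0; 0; 1; 0; 1; 1; 2; 0];
 [:: 2; 0; 0; 2; 0; 1; 0; 2; 2; 2; 0];
 [:: 0; 1; 0; 2; 0; 2; 0; 2; 1; 1; 0];
 [:: 0; 0; 2; 1; 0; 1; 0; 2; 1; 1; 0];
 [:: 1; 0; 0; 0; 2; 1; 0; 1; 1; 2; 0];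
 [:: 0; 1; 0; 0; 1; 1; 0; 2; 2; 2; 0];
 [:: 0; 0; 1; 0; 1; 1; 0; 1; 1; 1; 0];
 [:: 0; 0; 0; 1; 1; 2; 0; 1; 1; 2; 0];
 [:: 1; 2; 0; 0; 0; 0; 1; 1; 2; 1; 0];
 [:: 1; 0; 2; 0; 0; 0; 1; 2; 1; 2; 0];
 [:: 0; 1; 2; 0; 0; 0; 2; 1; 1; 2; 0];
 [:: 2; 0; 0; 2; 0; 0; 1; 2; 2; 2; 0];
 [:: 0; 1; 0; 1; 0; 0; 2; 1; 2; 1; 0];
 [:: 0; 0; 2; 2; 0; 0; 1; 1; 2; 1; 0];
 [:: 1; 0; 0; 0; 2; 0; 1; 2; 1; 1; 0];
 [:: 0; 1; 0; 0; 2; 0; 1; 2; 1; 1; 0];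
 [:: 0; 0; 1; 0; 2; 0; 1; 2; 1; 1; 0];
 [:: 0; 0; 0; 1; 1; 0; 2; 1; 2; 2; 0];
 [:: 1; 0; 0; 0; 0; 1; 2; 2; 2; 1; 0];
 [:: 0; 2; 0; 0; 0; 2; 2; 2; 1; 2; 0];
 [:: 0; 0; 1; 0; 0; 1; 1; 1; 2; 2; 0];
 [:: 0; 0; 0; 2; 0; 1; 2; 1; 1; 2; 0];
 [:: 0; 0; 0; 0; 1; 1; 2; 1; 2; 2; 0];
 [:: 1; 2; 1; 2; 2; 0; 0; 0; 0; 0; 1];
 [:: 2; 2; 2; 1; 0; 1; 0; 0; 0; 0; 1];
 [:: 1; 2; 1; 0; 1; 2; 0; 0; 0; 0; 1];
 [:: 1; 2; 0; 1; 1; 2; 0; 0; 0; 0; 1];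
 [:: 1; 0; 2; 1; 2; 2; 0; 0; 0; 0; 1];
 [:: 0; 1; 2; 1; 1; 2; 0; 0; 0; 0; 2];
 [:: 2; 2; 1; 2; 0; 0; 2; 0; 0; 0; 2];
 [:: 2; 1; 2; 0; 1; 0; 2; 0; 0; 0; 1];
 [:: 1; 1; 0; 1; 2; 0; 1; 0; 0; 0; 1];
 [:: 1; 0; 1; 1; 2; 0; 1; 0; 0; 0; 2];
 [:: 0; 1; 2; 1; 1; 0; 1; 0; 0; 0; 2];
 [:: 1; 1; 2; 0; 0; 1; 2; 0; 0; 0; 2];
 [:: 2; 2; 0; 2; 0; 1; 2; 0; 0; 0; 2];
 [:: 1; 0; 1; 1; 0; 2; 2; 0; 0; 0; 1];
 [:: 0; 1; 2; 2; 0; 1; 1; 0; 0; 0; 2];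
 [:: 2; 1; 0; 0; 2; 1; 1; 0; 0; 0; 2];
 [:: 1; 0; 1; 0; 2; 1; 1; 0; 0; 0; 2];
 [:: 0; 1; 1; 0; 1; 1; 1; 0; 0; 0; 1];
 [:: 2; 0; 0; 1; 1; 2; 1; 0; 0; 0; 2];
 [:: 0; 2; 0; 1; 2; 1; 1; 0; 0; 0; 1];
 [:: 0; 0; 1; 1; 1; 2; 2; 0; 0; 0; 1];
 [:: 1; 1; 2; 2; 0; 0; 0; 1; 0; 0; 1];
 [:: 2; 2; 2; 0; 2; 0; 0; 2; 0; 0; 1];
 [:: 2; 1; 0; 2; 1; 0; 0; 2; 0; 0; 1];
 [:: 1; 0; 2; 2; 2; 0; 0; 1; 0; 0; 1];
 [:: 0; 1; 2; 1; 1; 0; 0; 1; 0; 0; 2];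
 [:: 1; 2; 1; 0; 0; 1; 0; 1; 0; 0; 2];
 [:: 2; 1; 0; 1; 0; 2; 0; 1; 0; 0; 2];
 [:: 1; 0; 2; 2; 0; 1; 0; 1; 0; 0; 1];
 [:: 0; 2; 1; 1; 0; 1; 0; 1; 0; 0; 2];
 [:: 2; 1; 0; 0; 2; 1; 0; 1; 0; 0; 2];
 [:: 1; 0; 2; 0; 1; 1; 0; 2; 0; 0; 2];
 [:: 0; 1; 2; 0; 1; 2; 0; 2; 0; 0; 1];
 [:: 1; 0; 0; 2; 2; 2; 0; 2; 0; 0; 2];
 [:: 0; 1; 0; 2; 2; 2; 0; 2; 0; 0; 2];
 [:: 0; 0; 1; 2; 2; 2; 0; 2; 0; 0; 2];
 [:: 1; 2; 1; 0; 0; 0; 2; 2; 0; 0; 1];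
 [:: 2; 2; 0; 2; 0; 0; 2; 1; 0; 0; 2];
 [:: 2; 0; 1; 1; 0; 0; 1; 2; 0; 0; 2];
 [:: 0; 1; 1; 2; 0; 0; 1; 2; 0; 0; 1];
 [:: 1; 1; 0; 0; 2; 0; 2; 1; 0; 0; 1];
 [:: 1; 0; 1; 0; 2; 0; 1; 1; 0; 0; 2];
 [:: 0; 1; 2; 0; 2; 0; 2; 1; 0; 0; 1];
 [:: 2; 0; 0; 2; 2; 0; 1; 1; 0; 0; 1];
 [:: 0; 2; 0; 1; 1; 0; 1; 2; 0; 0; 2];
 [:: 0; 0; 1; 2; 1; 0; 2; 1; 0; 0; 2];
 [:: 1; 1; 0; 0; 0; 2; 2; 1; 0; 0; 2];
 [:: 1; 0; 1; 0; 0; 2; 2; 1; 0; 0; 2];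
 [:: 0; 2; 1; 0; 0; 1; 1; 1; 0; 0; 2];
 [:: 2; 0; 0; 1; 0; 1; 1; 2; 0; 0; 1];
 [:: 0; 2; 0; 2; 0; 2; 1; 1; 0; 0; 1];
 [:: 0; 0; 1; 1; 0; 2; 2; 2; 0; 0; 1];
 [:: 2; 0; 0; 0; 2; 1; 1; 2; 0; 0; 1];
 [:: 0; 1; 0; 0; 2; 1; 2; 1; 0; 0; 1];
 [:: 0; 0; 2; 0; 1; 2; 1; 1; 0; 0; 1];
 [:: 0; 0; 0; 2; 2; 2; 1; 2; 0; 0; 2];
 [:: 2; 1; 1; 2; 0; 0; 0; 0; 2; 0; 1];
 [:: 2; 1; 1; 0; 1; 0; 0; 0; 2; 0; 1];
 [:: 2; 2; 0; 1; 1; 0; 0; 0; 2; 0; 1];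
 [:: 1; 0; 1; 1; 1; 0; 0; 0; 1; 0; 1];
 [:: 0; 1; 2; 1; 1; 0; 0; 0; 1; 0; 2];
 [:: 2; 1; 1; 0; 0; 1; 0; 0; 2; 0; 1];
 [:: 1; 1; 0; 1; 0; 1; 0; 0; 2; 0; 2];
 [:: 2; 0; 1; 2; 0; 2; 0; 0; 1; 0; 1];
 [:: 0; 2; 2; 2; 0; 2; 0; 0; 2; 0; 1];
 [:: 1; 2; 0; 0; 1; 2; 0; 0; 1; 0; 1];
 [:: 2; 0; 2; 0; 2; 1; 0; 0; 1; 0; 1];
 [:: 0; 1; 1; 0; 1; 2; 0; 0; 2; 0; 2];
 [:: 1; 0; 0; 1; 1; 1; 0; 0; 2; 0; 2];
 [:: 0; 2; 0; 2; 1; 1; 0; 0; 1; 0; 2];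
 [:: 0; 0; 2; 1; 2; 1; 0; 0; 1; 0; 1];
 [:: 2; 1; 1; 0; 0; 0; 1; 0; 2; 0; 1];
 [:: 2; 2; 0; 2; 0; 0; 2; 0; 1; 0; 2];
 [:: 1; 0; 1; 2; 0; 0; 2; 0; 2; 0; 1];
 [:: 0; 2; 1; 1; 0; 0; 1; 0; 2; 0; 2];
 [:: 1; 1; 0; 0; 1; 0; 2; 0; 2; 0; 2];
 [:: 2; 0; 2; 0; 1; 0; 2; 0; 1; 0; 1];
 [:: 0; 1; 2; 0; 2; 0; 1; 0; 2; 0; 1];
 [:: 1; 0; 0; 2; 1; 0; 1; 0; 2; 0; 1];
 [:: 0; 1; 0; 1; 2; 0; 2; 0; 1; 0; 2];
 [:: 0; 0; 2; 2; 1; 0; 1; 0; 2; 0; 1];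
 [:: 1; 1; 0; 0; 0; 2; 1; 0; 1; 0; 2];
 [:: 1; 0; 2; 0; 0; 2; 1; 0; 2; 0; 1];
 [:: 0; 1; 1; 0; 0; 2; 1; 0; 1; 0; 2];
 [:: 1; 0; 0; 1; 0; 1; 2; 0; 2; 0; 2];
 [:: 0; 2; 0; 1; 0; 1; 2; 0; 2; 0; 1];
 [:: 0; 0; 1; 1; 0; 2; 2; 0; 1; 0; 1];
 [:: 2; 0; 0; 0; 2; 2; 2; 0; 2; 0; 1];
 [:: 0; 1; 0; 0; 2; 2; 1; 0; 1; 0; 2];
 [:: 0; 0; 2; 0; 2; 1; 1; 0; 1; 0; 1];
 [:: 0; 0; 0; 1; 2; 1; 2; 0; 1; 0; 2];
 [:: 1; 2; 2; 0; 0; 0; 0; 1; 1; 0; 2];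
 [:: 1; 2; 0; 1; 0; 0; 0; 2; 1; 0; 1];
 [:: 1; 0; 2; 2; 0; 0; 0; 1; 1; 0; 1];
 [:: 0; 2; 1; 1; 0; 0; 0; 2; 1; 0; 1];
 [:: 2; 2; 0; 0; 1; 0; 0; 1; 1; 0; 2];
 [:: 2; 0; 1; 0; 1; 0; 0; 1; 1; 0; 2];
 [:: 0; 1; 1; 0; 2; 0; 0; 2; 1; 0; 2];
 [:: 1; 0; 0; 1; 2; 0; 0; 2; 2; 0; 1];
 [:: 0; 2; 0; 1; 1; 0; 0; 2; 1; 0; 1];
 [:: 0; 0; 2; 2; 1; 0; 0; 2; 1; 0; 1];
 [:: 1; 1; 0; 0; 0; 1; 0; 1; 1; 0; 1];
 [:: 2; 0; 2; 0; 0; 1; 0; 1; 2; 0; 1];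
 [:: 0; 2; 1; 0; 0; 1; 0; 1; 2; 0; 2];
 [:: 2; 0; 0; 2; 0; 2; 0; 1; 1; 0; 1];
 [:: 0; 1; 0; 2; 0; 1; 0; 1; 2; 0; 2];
 [:: 0; 0; 2; 1; 0; 2; 0; 1; 1; 0; 2];
 [:: 2; 0; 0; 0; 1; 1; 0; 1; 1; 0; 2];
 [:: 0; 1; 0; 0; 1; 1; 0; 2; 2; 0; 1];
 [:: 0; 0; 1; 0; 1; 2; 0; 1; 2; 0; 2];
 [:: 0; 0; 0; 1; 1; 1; 0; 1; 2; 0; 1];
 [:: 1; 2; 0; 0; 0; 0; 1; 1; 2; 0; 1];
 [:: 2; 0; 1; 0; 0; 0; 1; 1; 1; 0; 1];
 [:: 0; 1; 2; 0; 0; 0; 2; 2; 2; 0; 2];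
 [:: 1; 0; 0; 2; 0; 0; 1; 2; 1; 0; 2];
 [:: 0; 2; 0; 1; 0; 0; 2; 2; 1; 0; 1];
 [:: 0; 0; 2; 1; 0; 0; 2; 2; 2; 0; 2];
 [:: 1; 0; 0; 0; 2; 0; 1; 2; 2; 0; 1];
 [:: 0; 1; 0; 0; 2; 0; 2; 1; 1; 0; 1];
 [:: 0; 0; 2; 0; 1; 0; 2; 2; 2; 0; 2];
 [:: 0; 0; 0; 2; 1; 0; 1; 1; 2; 0; 1];
 [:: 2; 0; 0; 0; 0; 1; 1; 2; 1; 0; 1];
 [:: 0; 2; 0; 0; 0; 1; 2; 1; 2; 0; 1];
 [:: 0; 0; 2; 0; 0; 1; 2; 2; 2; 0; 2];
 [:: 0; 0; 0; 2; 0; 1; 2; 1; 1; 0; 1];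
 [:: 0; 0; 0; 0; 1; 2; 2; 2; 1; 0; 1];
 [:: 2; 1; 2; 2; 0; 0; 0; 0; 0; 1; 1];
 [:: 2; 2; 1; 0; 1; 0; 0; 0; 0; 1; 2];
 [:: 2; 1; 0; 1; 2; 0; 0; 0; 0; 1; 1];
 [:: 2; 0; 1; 1; 2; 0; 0; 0; 0; 1; 1];
 [:: 0; 2; 1; 2; 2; 0; 0; 0; 0; 1; 1];
 [:: 2; 1; 2; 0; 0; 2; 0; 0; 0; 2; 2];
 [:: 1; 2; 0; 1; 0; 2; 0; 0; 0; 1; 2];
 [:: 1; 0; 1; 2; 0; 1; 0; 0; 0; 1; 1];
 [:: 0; 1; 1; 2; 0; 1; 0; 0; 0; 2; 1];
 [:: 1; 2; 0; 0; 1; 2; 0; 0; 0; 2; 1];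
 [:: 2; 0; 2; 0; 1; 2; 0; 0; 0; 2; 2];
 [:: 0; 1; 1; 0; 2; 2; 0; 0; 0; 1; 1];
 [:: 1; 0; 0; 2; 1; 1; 0; 0; 0; 2; 2];
 [:: 0; 1; 0; 2; 1; 1; 0; 0; 0; 2; 1];
 [:: 0; 0; 1; 1; 2; 1; 0; 0; 0; 2; 2];
 [:: 1; 2; 2; 0; 0; 0; 1; 0; 0; 1; 1];
 [:: 2; 2; 0; 2; 0; 0; 2; 0; 0; 1; 2];
 [:: 1; 0; 2; 1; 0; 0; 2; 0; 0; 1; 2];
 [:: 0; 2; 2; 2; 0; 0; 1; 0; 0; 1; 1];
 [:: 2; 1; 0; 0; 1; 0; 1; 0; 0; 2; 1];
 [:: 1; 0; 1; 0; 2; 0; 1; 0; 0; 2; 2];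
 [:: 0; 2; 2; 0; 1; 0; 1; 0; 0; 1; 1];
 [:: 1; 0; 0; 2; 1; 0; 1; 0; 0; 2; 2];
 [:: 0; 2; 0; 1; 1; 0; 2; 0; 0; 2; 1];
 [:: 0; 0; 2; 2; 2; 0; 2; 0; 0; 2; 1];
 [:: 2; 1; 0; 0; 0; 2; 2; 0; 0; 1; 1];
 [:: 2; 0; 2; 0; 0; 2; 1; 0; 0; 2; 2];
 [:: 0; 1; 1; 0; 0; 1; 2; 0; 0; 2; 2];
 [:: 1; 0; 0; 2; 0; 2; 1; 0; 0; 1; 1];
 [:: 0; 1; 0; 2; 0; 1; 1; 0; 0; 2; 1];
 [:: 0; 0; 2; 2; 0; 1; 1; 0; 0; 1; 2];
 [:: 1; 0; 0; 0; 2; 2; 1; 0; 0; 2; 1];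
 [:: 0; 1; 0; 0; 2; 2; 1; 0; 0; 2; 1];
 [:: 0; 0; 1; 0; 1; 1; 2; 0; 0; 1; 2];
 [:: 0; 0; 0; 2; 1; 1; 2; 0; 0; 1; 2];
 [:: 1; 1; 2; 0; 0; 0; 0; 2; 0; 1; 2];
 [:: 1; 1; 0; 1; 0; 0; 0; 2; 0; 1; 2];
 [:: 2; 0; 1; 1; 0; 0; 0; 2; 0; 1; 2];
 [:: 0; 1; 1; 1; 0; 0; 0; 1; 0; 1; 1];
 [:: 1; 1; 0; 0; 1; 0; 0; 2; 0; 1; 2];
 [:: 1; 0; 1; 0; 1; 0; 0; 2; 0; 2; 1];
 [:: 0; 1; 2; 0; 2; 0; 0; 1; 0; 1; 2];
 [:: 2; 0; 0; 1; 2; 0; 0; 1; 0; 1; 1];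
 [:: 0; 2; 0; 2; 1; 0; 0; 1; 0; 1; 2];
 [:: 0; 0; 1; 1; 1; 0; 0; 2; 0; 2; 1];
 [:: 1; 1; 0; 0; 0; 1; 0; 2; 0; 1; 2];
 [:: 2; 0; 2; 0; 0; 2; 0; 1; 0; 2; 2];
 [:: 0; 1; 2; 0; 0; 2; 0; 2; 0; 1; 1];
 [:: 1; 0; 0; 1; 0; 2; 0; 2; 0; 2; 1];
 [:: 0; 2; 0; 1; 0; 2; 0; 1; 0; 1; 2];
 [:: 0; 0; 2; 1; 0; 1; 0; 2; 0; 1; 1];
 [:: 1; 0; 0; 0; 2; 1; 0; 1; 0; 2; 1];
 [:: 0; 2; 0; 0; 2; 1; 0; 2; 0; 1; 1];
 [:: 0; 0; 1; 0; 1; 2; 0; 2; 0; 2; 1];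
 [:: 0; 0; 0; 2; 2; 2; 0; 2; 0; 1; 2];
 [:: 2; 2; 0; 0; 0; 0; 1; 1; 0; 2; 1];
 [:: 2; 0; 1; 0; 0; 0; 2; 1; 0; 1; 1];
 [:: 0; 2; 2; 0; 0; 0; 1; 1; 0; 1; 1];
 [:: 2; 0; 0; 1; 0; 0; 1; 1; 0; 2; 2];
 [:: 0; 1; 0; 1; 0; 0; 1; 1; 0; 2; 2];
 [:: 0; 0; 1; 2; 0; 0; 2; 2; 0; 1; 1];
 [:: 1; 0; 0; 0; 1; 0; 1; 1; 0; 1; 1];
 [:: 0; 2; 0; 0; 1; 0; 1; 2; 0; 1; 2];
 [:: 0; 0; 2; 0; 2; 0; 1; 1; 0; 1; 2];
 [:: 0; 0; 0; 1; 1; 0; 1; 1; 0; 2; 2];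
 [:: 2; 0; 0; 0; 0; 1; 1; 2; 0; 1; 1];
 [:: 0; 1; 0; 0; 0; 1; 1; 1; 0; 1; 2];
 [:: 0; 0; 2; 0; 0; 1; 2; 1; 0; 2; 1];
 [:: 0; 0; 0; 2; 0; 1; 2; 2; 0; 1; 1];
 [:: 0; 0; 0; 0; 1; 1; 2; 1; 0; 1; 2];
 [:: 1; 2; 2; 0; 0; 0; 0; 0; 1; 1; 2];
 [:: 2; 1; 0; 1; 0; 0; 0; 0; 1; 2; 2];
 [:: 1; 0; 1; 2; 0; 0; 0; 0; 1; 1; 2];
 [:: 0; 1; 1; 2; 0; 0; 0; 0; 1; 1; 2];
 [:: 1; 2; 0; 0; 2; 0; 0; 0; 2; 2; 2];
 [:: 2; 0; 1; 0; 2; 0; 0; 0; 1; 2; 1];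
 [:: 0; 1; 2; 0; 1; 0; 0; 0; 1; 1; 1];
 [:: 2; 0; 0; 1; 2; 0; 0; 0; 2; 1; 1];
 [:: 0; 2; 0; 1; 2; 0; 0; 0; 2; 2; 2];
 [:: 0; 0; 2; 1; 1; 0; 0; 0; 2; 2; 1];
 [:: 2; 2; 0; 0; 0; 1; 0; 0; 1; 1; 1];
 [:: 2; 0; 2; 0; 0; 2; 0; 0; 1; 2; 2];
 [:: 0; 2; 1; 0; 0; 2; 0; 0; 1; 2; 1];
 [:: 1; 0; 0; 1; 0; 1; 0; 0; 2; 1; 2];
 [:: 0; 1; 0; 2; 0; 1; 0; 0; 2; 2; 1];
 [:: 0; 0; 2; 1; 0; 1; 0; 0; 2; 2; 1];
 [:: 1; 0; 0; 0; 2; 2; 0; 0; 1; 1; 2];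
 [:: 0; 2; 0; 0; 2; 1; 0; 0; 2; 2; 2];
 [:: 0; 0; 2; 0; 2; 1; 0; 0; 1; 1; 1];
 [:: 0; 0; 0; 2; 2; 1; 0; 0; 2; 1; 1];
 [:: 1; 2; 0; 0; 0; 0; 2; 0; 1; 2; 1];
 [:: 1; 0; 1; 0; 0; 0; 2; 0; 1; 2; 1];
 [:: 0; 1; 1; 0; 0; 0; 2; 0; 1; 2; 2];
 [:: 1; 0; 0; 1; 0; 0; 2; 0; 1; 2; 1];
 [:: 0; 1; 0; 1; 0; 0; 2; 0; 2; 1; 1];
 [:: 0; 0; 1; 2; 0; 0; 1; 0; 1; 1; 2];
 [:: 1; 0; 0; 0; 1; 0; 2; 0; 1; 2; 1];
 [:: 0; 2; 0; 0; 2; 0; 1; 0; 2; 2; 2];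
 [:: 0; 0; 1; 0; 2; 0; 2; 0; 2; 1; 1];
 [:: 0; 0; 0; 2; 1; 0; 1; 0; 2; 1; 1];
 [:: 2; 0; 0; 0; 0; 1; 1; 0; 2; 1; 2];
 [:: 0; 1; 0; 0; 0; 2; 1; 0; 1; 1; 2];
 [:: 0; 0; 1; 0; 0; 1; 1; 0; 2; 2; 2];
 [:: 0; 0; 0; 1; 0; 1; 1; 0; 1; 1; 1];
 [:: 0; 0; 0; 0; 1; 1; 2; 0; 1; 1; 2];
 [:: 2; 2; 0; 0; 0; 0; 0; 1; 1; 2; 1];
 [:: 1; 0; 1; 0; 0; 0; 0; 1; 2; 2; 2];
 [:: 0; 1; 2; 0; 0; 0; 0; 1; 1; 2; 1];
 [:: 2; 0; 0; 2; 0; 0; 0; 2; 2; 2; 1];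
 [:: 0; 1; 0; 2; 0; 0; 0; 1; 2; 1; 2];
 [:: 0; 0; 1; 2; 0; 0; 0; 2; 1; 1; 2];
 [:: 2; 0; 0; 0; 1; 0; 0; 1; 1; 1; 2];
 [:: 0; 2; 0; 0; 2; 0; 0; 1; 2; 2; 2];
 [:: 0; 0; 1; 0; 1; 0; 0; 2; 1; 2; 1];
 [:: 0; 0; 0; 2; 2; 0; 0; 1; 1; 2; 1];
 [:: 2; 0; 0; 0; 0; 2; 0; 1; 2; 1; 1];
 [:: 0; 1; 0; 0; 0; 2; 0; 1; 2; 1; 1];
 [:: 0; 0; 1; 0; 0; 2; 0; 1; 2; 1; 1];
 [:: 0; 0; 0; 1; 0; 2; 0; 1; 2; 1; 1];
 [:: 0; 0; 0; 0; 1; 1; 0; 2; 1; 2; 2];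
 [:: 2; 0; 0; 0; 0; 0; 1; 1; 2; 1; 2];
 [:: 0; 1; 0; 0; 0; 0; 1; 2; 2; 2; 1];
 [:: 0; 0; 2; 0; 0; 0; 2; 2; 2; 1; 2];
 [:: 0; 0; 0; 1; 0; 0; 1; 1; 1; 2; 2];
 [:: 0; 0; 0; 0; 2; 0; 1; 2; 1; 1; 2];
 [:: 0; 0; 0; 0; 0; 1; 1; 2; 1; 2; 2]].

Lemma adm_11_6 : admissible_of_type 11 6.
Proof.
apply: (@main_gen 11 6 L11_6).
- by vm_compute.
- by vm_compute.
- by vm_compute.
- by vm_compute.
- by vm_compute.
- by vm_compute.
Qed.

Definition L10_6 : seq (seq nat) := [:: [:: 2; 1; 1; 1; 2; 2; 0; 0; 0; 0];
 [:: 1; 1; 2; 2; 1; 0; 1; 0; 0; 0];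
 [:: 2; 1; 1; 1; 0; 2; 1; 0; 0; 0];
 [:: 2; 2; 1; 0; 2; 1; 2; 0; 0; 0];
 [:: 1; 2; 0; 2; 1; 1; 2; 0; 0; 0];
 [:: 1; 0; 2; 2; 1; 1; 1; 0; 0; 0];
 [:: 0; 2; 1; 2; 2; 2; 2; 0; 0; 0];
 [:: 1; 1; 2; 1; 2; 0; 0; 1; 0; 0];
 [:: 2; 1; 1; 1; 0; 2; 0; 2; 0; 0];
 [:: 2; 2; 1; 0; 1; 2; 0; 2; 0; 0];
 [:: 1; 2; 0; 2; 1; 1; 0; 2; 0; 0];
 [:: 1; 0; 2; 2; 2; 1; 0; 1; 0; 0];
 [:: 0; 2; 1; 2; 2; 2; 0; 1; 0; 0];
 [:: 1; 1; 2; 2; 0; 0; 1; 1; 0; 0];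
 [:: 1; 1; 2; 0; 2; 0; 1; 1; 0; 0];
 [:: 2; 1; 0; 2; 1; 0; 1; 2; 0; 0];
 [:: 2; 0; 1; 1; 1; 0; 2; 2; 0; 0];
 [:: 0; 1; 2; 1; 1; 0; 2; 2; 0; 0];
 [:: 2; 2; 1; 0; 0; 2; 2; 2; 0; 0];
 [:: 1; 2; 0; 2; 0; 2; 2; 1; 0; 0];
 [:: 1; 0; 2; 2; 0; 1; 2; 1; 0; 0];
 [:: 0; 2; 1; 2; 0; 2; 2; 2; 0; 0];
 [:: 1; 2; 0; 0; 2; 2; 2; 1; 0; 0];
 [:: 1; 0; 2; 0; 1; 2; 1; 2; 0; 0];
 [:: 0; 2; 1; 0; 2; 2; 1; 1; 0; 0];
 [:: 2; 0; 0; 1; 1; 1; 1; 2; 0; 0];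
 [:: 0; 2; 0; 1; 2; 2; 1; 1; 0; 0];
 [:: 0; 0; 2; 1; 1; 1; 1; 2; 0; 0];
 [:: 1; 1; 1; 2; 1; 0; 0; 0; 1; 0];
 [:: 2; 1; 2; 2; 0; 2; 0; 0; 2; 0];
 [:: 2; 1; 2; 0; 2; 2; 0; 0; 2; 0];
 [:: 1; 1; 0; 1; 2; 2; 0; 0; 2; 0];
 [:: 1; 0; 1; 1; 2; 1; 0; 0; 1; 0];
 [:: 0; 2; 2; 1; 2; 2; 0; 0; 1; 0];
 [:: 1; 1; 1; 1; 0; 0; 2; 0; 1; 0];
 [:: 1; 1; 1; 0; 2; 0; 2; 0; 1; 0];
 [:: 2; 1; 0; 2; 1; 0; 1; 0; 1; 0];
 [:: 2; 0; 2; 2; 1; 0; 1; 0; 2; 0];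
 [:: 0; 1; 1; 2; 1; 0; 1; 0; 2; 0];
 [:: 2; 1; 2; 0; 0; 2; 1; 0; 2; 0];
 [:: 1; 1; 0; 1; 0; 2; 1; 0; 2; 0];
 [:: 1; 0; 1; 2; 0; 1; 2; 0; 1; 0];
 [:: 0; 1; 2; 1; 0; 2; 1; 0; 1; 0];
 [:: 1; 2; 0; 0; 2; 2; 2; 0; 2; 0];
 [:: 1; 0; 1; 0; 2; 1; 2; 0; 1; 0];
 [:: 0; 2; 2; 0; 2; 2; 2; 0; 1; 0];
 [:: 2; 0; 0; 2; 1; 1; 1; 0; 1; 0];
 [:: 0; 2; 0; 2; 2; 2; 2; 0; 1; 0];
 [:: 0; 0; 1; 2; 1; 1; 1; 0; 2; 0];
 [:: 1; 1; 1; 2; 0; 0; 0; 1; 1; 0];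
 [:: 1; 1; 1; 0; 2; 0; 0; 1; 1; 0];
 [:: 2; 1; 0; 1; 2; 0; 0; 1; 1; 0];
 [:: 2; 0; 2; 1; 1; 0; 0; 2; 2; 0];
 [:: 0; 1; 1; 1; 2; 0; 0; 1; 2; 0];
 [:: 2; 1; 2; 0; 0; 2; 0; 2; 2; 0];
 [:: 1; 1; 0; 1; 0; 2; 0; 2; 2; 0];
 [:: 1; 0; 1; 1; 0; 1; 0; 2; 1; 0];
 [:: 0; 1; 2; 1; 0; 2; 0; 2; 1; 0];
 [:: 1; 2; 0; 0; 1; 2; 0; 2; 2; 0];
 [:: 1; 0; 1; 0; 2; 1; 0; 1; 1; 0];
 [:: 0; 2; 2; 0; 1; 1; 0; 1; 1; 0];
 [:: 2; 0; 0; 2; 2; 1; 0; 1; 1; 0];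
 [:: 0; 2; 0; 2; 1; 2; 0; 2; 1; 0];
 [:: 0; 0; 1; 2; 2; 1; 0; 1; 2; 0];
 [:: 1; 1; 1; 0; 0; 0; 2; 2; 1; 0];
 [:: 2; 1; 0; 2; 0; 0; 1; 1; 1; 0];
 [:: 2; 0; 2; 2; 0; 0; 1; 1; 2; 0];
 [:: 0; 1; 1; 2; 0; 0; 1; 1; 2; 0];
 [:: 2; 1; 0; 0; 2; 0; 1; 1; 1; 0];
 [:: 2; 0; 2; 0; 1; 0; 1; 2; 2; 0];
 [:: 0; 1; 1; 0; 2; 0; 1; 1; 2; 0];
 [:: 1; 0; 0; 1; 1; 0; 2; 2; 2; 0];
 [:: 0; 1; 0; 2; 1; 0; 1; 2; 2; 0];
 [:: 0; 0; 2; 1; 1; 0; 2; 2; 1; 0];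
 [:: 1; 2; 0; 0; 0; 2; 2; 2; 2; 0];
 [:: 1; 0; 1; 0; 0; 1; 2; 2; 1; 0];
 [:: 0; 2; 2; 0; 0; 2; 2; 2; 1; 0];
 [:: 2; 0; 0; 2; 0; 1; 1; 1; 1; 0];
 [:: 0; 2; 0; 2; 0; 2; 2; 2; 1; 0];
 [:: 0; 0; 1; 2; 0; 1; 1; 1; 2; 0];
 [:: 2; 0; 0; 0; 1; 1; 1; 2; 1; 0];
 [:: 0; 2; 0; 0; 1; 1; 1; 1; 1; 0];
 [:: 0; 0; 1; 0; 1; 1; 1; 2; 2; 0];
 [:: 0; 0; 0; 1; 1; 1; 1; 2; 2; 0];
 [:: 2; 1; 1; 2; 1; 0; 0; 0; 0; 2];
 [:: 1; 2; 2; 2; 0; 1; 0; 0; 0; 2];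
 [:: 1; 1; 2; 0; 2; 1; 0; 0; 0; 1];
 [:: 2; 1; 0; 1; 1; 2; 0; 0; 0; 1];
 [:: 2; 0; 1; 1; 1; 1; 0; 0; 0; 2];
 [:: 0; 1; 2; 1; 1; 2; 0; 0; 0; 1];
 [:: 2; 2; 1; 1; 0; 0; 2; 0; 0; 1];
 [:: 2; 1; 1; 0; 1; 0; 2; 0; 0; 2];
 [:: 1; 1; 0; 2; 2; 0; 1; 0; 0; 2];
 [:: 1; 0; 2; 2; 2; 0; 1; 0; 0; 1];
 [:: 0; 1; 1; 2; 2; 0; 1; 0; 0; 2];
 [:: 1; 2; 2; 0; 0; 1; 1; 0; 0; 2];
 [:: 2; 1; 0; 1; 0; 1; 1; 0; 0; 2];
 [:: 2; 0; 1; 1; 0; 2; 1; 0; 0; 1];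
 [:: 0; 2; 2; 1; 0; 1; 1; 0; 0; 2];
 [:: 2; 1; 0; 0; 2; 1; 2; 0; 0; 1];
 [:: 2; 0; 1; 0; 1; 2; 2; 0; 0; 2];
 [:: 0; 1; 2; 0; 2; 1; 2; 0; 0; 1];
 [:: 1; 0; 0; 2; 2; 2; 2; 0; 0; 1];
 [:: 0; 1; 0; 2; 2; 1; 2; 0; 0; 1];
 [:: 0; 0; 1; 2; 1; 2; 2; 0; 0; 2];
 [:: 2; 1; 1; 2; 0; 0; 0; 1; 0; 2];
 [:: 2; 1; 1; 0; 2; 0; 0; 1; 0; 2];
 [:: 1; 1; 0; 1; 2; 0; 0; 1; 0; 2];
 [:: 1; 0; 2; 1; 2; 0; 0; 1; 0; 1];
 [:: 0; 1; 1; 1; 2; 0; 0; 1; 0; 2];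
 [:: 1; 2; 2; 0; 0; 1; 0; 2; 0; 1];
 [:: 2; 1; 0; 1; 0; 2; 0; 1; 0; 1];
 [:: 2; 0; 1; 1; 0; 1; 0; 1; 0; 2];
 [:: 0; 1; 2; 1; 0; 2; 0; 1; 0; 1];
 [:: 2; 2; 0; 0; 1; 2; 0; 2; 0; 1];
 [:: 2; 0; 1; 0; 1; 2; 0; 2; 0; 2];
 [:: 0; 1; 2; 0; 1; 1; 0; 2; 0; 1];
 [:: 1; 0; 0; 2; 2; 1; 0; 1; 0; 2];
 [:: 0; 2; 0; 2; 1; 2; 0; 2; 0; 1];
 [:: 0; 0; 1; 2; 2; 1; 0; 2; 0; 2];
 [:: 2; 1; 1; 0; 0; 0; 2; 1; 0; 2];
 [:: 1; 2; 0; 2; 0; 0; 1; 2; 0; 1];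
 [:: 1; 0; 2; 2; 0; 0; 1; 2; 0; 1];
 [:: 0; 2; 1; 2; 0; 0; 1; 2; 0; 1];
 [:: 1; 1; 0; 0; 2; 0; 1; 1; 0; 2];
 [:: 1; 0; 2; 0; 2; 0; 1; 1; 0; 1];
 [:: 0; 1; 1; 0; 2; 0; 1; 1; 0; 2];
 [:: 2; 0; 0; 1; 1; 0; 2; 2; 0; 1];
 [:: 0; 2; 0; 1; 1; 0; 2; 1; 0; 1];
 [:: 0; 0; 2; 1; 1; 0; 2; 2; 0; 1];
 [:: 2; 1; 0; 0; 0; 1; 2; 2; 0; 1];
 [:: 2; 0; 1; 0; 0; 2; 2; 1; 0; 2];
 [:: 0; 1; 2; 0; 0; 1; 2; 2; 0; 1];
 [:: 1; 0; 0; 2; 0; 2; 2; 2; 0; 2];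
 [:: 0; 1; 0; 2; 0; 1; 2; 2; 0; 2];
 [:: 0; 0; 1; 2; 0; 2; 2; 1; 0; 2];
 [:: 1; 0; 0; 0; 2; 2; 1; 1; 0; 2];
 [:: 0; 1; 0; 0; 2; 1; 2; 1; 0; 1];
 [:: 0; 0; 1; 0; 2; 2; 1; 1; 0; 2];
 [:: 0; 0; 0; 1; 2; 1; 1; 1; 0; 2];
 [:: 2; 2; 2; 2; 0; 0; 0; 0; 2; 1];
 [:: 2; 2; 2; 0; 2; 0; 0; 0; 2; 1];
 [:: 1; 1; 0; 2; 1; 0; 0; 0; 2; 2];
 [:: 1; 0; 1; 2; 1; 0; 0; 0; 1; 1];
 [:: 0; 1; 2; 2; 1; 0; 0; 0; 1; 2];
 [:: 1; 2; 1; 0; 0; 1; 0; 0; 1; 2];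
 [:: 2; 1; 0; 2; 0; 2; 0; 0; 1; 2];
 [:: 2; 0; 2; 2; 0; 2; 0; 0; 2; 1];
 [:: 0; 2; 1; 2; 0; 1; 0; 0; 2; 2];
 [:: 2; 1; 0; 0; 2; 1; 0; 0; 1; 1];
 [:: 2; 0; 2; 0; 2; 2; 0; 0; 2; 2];
 [:: 0; 1; 1; 0; 2; 1; 0; 0; 2; 1];
 [:: 1; 0; 0; 1; 1; 1; 0; 0; 2; 2];
 [:: 0; 1; 0; 1; 1; 2; 0; 0; 2; 1];
 [:: 0; 0; 2; 1; 1; 1; 0; 0; 1; 2];
 [:: 2; 2; 2; 0; 0; 0; 1; 0; 2; 1];
 [:: 1; 2; 0; 1; 0; 0; 1; 0; 2; 1];
 [:: 1; 0; 1; 1; 0; 0; 2; 0; 1; 1];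
 [:: 0; 2; 2; 1; 0; 0; 2; 0; 1; 1];
 [:: 1; 1; 0; 0; 2; 0; 2; 0; 2; 2];
 [:: 1; 0; 1; 0; 1; 0; 2; 0; 1; 1];
 [:: 0; 1; 2; 0; 1; 0; 2; 0; 1; 2];
 [:: 2; 0; 0; 2; 1; 0; 1; 0; 1; 1];
 [:: 0; 1; 0; 2; 2; 0; 1; 0; 1; 2];
 [:: 0; 0; 1; 2; 2; 0; 1; 0; 2; 1];
 [:: 2; 2; 0; 0; 0; 1; 1; 0; 1; 2];
 [:: 2; 0; 2; 0; 0; 2; 1; 0; 2; 1];
 [:: 0; 2; 1; 0; 0; 1; 1; 0; 2; 2];
 [:: 1; 0; 0; 1; 0; 2; 1; 0; 2; 1];
 [:: 0; 1; 0; 1; 0; 1; 1; 0; 2; 2];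
 [:: 0; 0; 2; 1; 0; 2; 1; 0; 1; 1];
 [:: 1; 0; 0; 0; 2; 2; 2; 0; 2; 1];
 [:: 0; 1; 0; 0; 2; 1; 2; 0; 2; 1];
 [:: 0; 0; 2; 0; 1; 2; 2; 0; 1; 1];
 [:: 0; 0; 0; 2; 1; 2; 2; 0; 1; 2];
 [:: 2; 2; 2; 0; 0; 0; 0; 2; 2; 2];
 [:: 1; 1; 0; 2; 0; 0; 0; 1; 2; 2];
 [:: 1; 0; 1; 2; 0; 0; 0; 1; 1; 1];
 [:: 0; 1; 2; 2; 0; 0; 0; 1; 1; 2];
 [:: 1; 1; 0; 0; 2; 0; 0; 1; 2; 2];
 [:: 1; 0; 1; 0; 2; 0; 0; 1; 1; 1];
 [:: 0; 1; 2; 0; 2; 0; 0; 1; 1; 2];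
 [:: 2; 0; 0; 1; 2; 0; 0; 1; 1; 1];
 [:: 0; 1; 0; 1; 2; 0; 0; 1; 1; 2];
 [:: 0; 0; 1; 1; 2; 0; 0; 1; 2; 1];
 [:: 2; 1; 0; 0; 0; 1; 0; 2; 1; 1];
 [:: 2; 0; 2; 0; 0; 2; 0; 2; 2; 2];
 [:: 0; 1; 1; 0; 0; 1; 0; 2; 2; 1];
 [:: 1; 0; 0; 1; 0; 1; 0; 1; 2; 2];
 [:: 0; 1; 0; 1; 0; 2; 0; 1; 2; 1];
 [:: 0; 0; 2; 1; 0; 1; 0; 1; 1; 2];
 [:: 1; 0; 0; 0; 1; 2; 0; 2; 2; 2];
 [:: 0; 1; 0; 0; 1; 1; 0; 2; 2; 1];
 [:: 0; 0; 2; 0; 1; 2; 0; 2; 1; 2];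
 [:: 0; 0; 0; 2; 2; 1; 0; 1; 1; 2];
 [:: 1; 1; 0; 0; 0; 0; 2; 2; 2; 2];
 [:: 1; 0; 1; 0; 0; 0; 2; 1; 1; 1];
 [:: 0; 1; 2; 0; 0; 0; 2; 1; 1; 2];
 [:: 2; 0; 0; 2; 0; 0; 1; 1; 1; 1];
 [:: 0; 1; 0; 2; 0; 0; 1; 2; 1; 2];
 [:: 0; 0; 1; 2; 0; 0; 1; 2; 2; 1];
 [:: 2; 0; 0; 0; 2; 0; 1; 1; 1; 1];
 [:: 0; 1; 0; 0; 2; 0; 1; 1; 1; 2];
 [:: 0; 0; 1; 0; 2; 0; 1; 1; 2; 1];
 [:: 0; 0; 0; 2; 1; 0; 1; 2; 2; 1];
 [:: 1; 0; 0; 0; 0; 2; 2; 2; 2; 1];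
 [:: 0; 1; 0; 0; 0; 1; 2; 2; 2; 1];
 [:: 0; 0; 2; 0; 0; 2; 2; 1; 1; 2];
 [:: 0; 0; 0; 2; 0; 2; 2; 1; 1; 2];
 [:: 0; 0; 0; 0; 2; 2; 1; 1; 1; 2]].

Lemma adm_10_6 : admissible_of_type 10 6.
Proof.
apply: (@main_gen 10 6 L10_6).
- by vm_compute.
- by vm_compute.
- by vm_compute.
- by vm_compute.
- by vm_compute.
- by vm_compute.
Qed.

Theorem lemma2p13 :
  admissible_of_type 11 7 /\ admissible_of_type 11 6 /\ admissible_of_type 10 6.
Proof.
split; [exact: adm_11_7 | split; [exact: adm_11_6 | exact: adm_10_6]].
Qed.
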